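(* Let $\theta:\mathbb R\to[0,1]$ be a smooth non-decreasing function with $\theta(t)=0$ for $t\le0$, $\theta(t)>0$ for $t>0$, $\theta(t)=1$ for $t\ge1$. Let $A(x,y)=x\theta(y)+x^2\theta(1-y)$ and consider the sub-Riemannian structure on $\mathbb R^3$ generated by $X=\partial_x$, $Y=\partial_y+A(x,y)\partial_z$, with Hamiltonian $H=\frac12\big(p_x^2+(p_y+A(x,y)p_z)^2\big)$ in coordinates $(x,y,z,p_x,p_y,p_z)$ on $T^*\mathbb R^3$. Fix $T>0$, and for $\alpha\in\mathbb R$ let $\lambda_\alpha$ be the covector $(p_x,p_y,p_z)=(0,1,\alpha)$ at the point $(0,-T,0)$. Define $\Phi:\mathbb R^2\to\mathbb R^3$ by $\Phi(t,\alpha)=\pi\circ e^{(t+T)\vec H}(\lambda_\alpha)$. Then $\Phi$ is an embedding on a neighborhood of any point $(t,0)$ with $t>0$.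
   Context: $\vec H$ denotes the Hamiltonian vector field of $H$ with respect to the canonical symplectic form, i.e. $\dot x=\partial H/\partial p_x$, $\dot p_x=-\partial H/\partial x$, etc.; $e^{s\vec H}$ is its flow and $\pi:T^*\mathbb R^3\to\mathbb R^3$ the projection. *)

(* Defs.v *)
From Stdlib Require Import Reals.
From Coquelicot Require Import Coquelicot.
Open Scope R_scope.

Definition smooth (f : R -> R) : Prop := forall (n : nat) (x : R), ex_derive_n f n x.

Definition cutoff (theta : R -> R) : Prop :=
  smooth theta /\
  (forall t, 0 <= theta t <= 1) /\
  (forall s t, s <= t -> theta s <= theta t) /\
  (forall t, t <= 0 -> theta t = 0) /\
  (forall t, 0 < t -> 0 < theta t) /\
  (forall t, 1 <= t -> theta t = 1).

Definition Afun (theta : R -> R) (x y : R) : R :=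
  x * theta y + x ^ 2 * theta (1 - y).

Definition Ham (theta : R -> R) (x y z px py pz : R) : R :=
  / 2 * (px ^ 2 + (py + Afun theta x y * pz) ^ 2).

(** (x,y,z,px,py,pz) : R -> R is an integral curve (defined for all times) of the
    Hamiltonian vector field of H:  q' = dH/dp,  p' = - dH/dq. *)
Definition ham_traj (theta : R -> R) (x y z px py pz : R -> R) : Prop :=
  forall s : R,
    is_derive x s (Derive (fun v => Ham theta (x s) (y s) (z s) v (py s) (pz s)) (px s)) /\
    is_derive y s (Derive (fun v => Ham theta (x s) (y s) (z s) (px s) v (pz s)) (py s)) /\
    is_derive z s (Derive (fun v => Ham theta (x s) (y s) (z s) (px s) (py s) v) (pz s)) /\
    is_derive px s (- Derive (fun v => Ham theta v (y s) (z s) (px s) (py s) (pz s)) (x s)) /\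
    is_derive py s (- Derive (fun v => Ham theta (x s) v (z s) (px s) (py s) (pz s)) (y s)) /\
    is_derive pz s (- Derive (fun v => Ham theta (x s) (y s) v (px s) (py s) (pz s)) (z s)).

(** F is an embedding on U: an immersion at every point of U (Frechet
    differentiable with injective differential), injective on U, and a
    homeomorphism of U onto its image (continuity of F follows from
    differentiability; continuity of the inverse is stated explicitly). *)
Definition embedding_on (U : R * R -> Prop) (F : R * R -> R * R * R) : Prop :=
  (forall p, U p ->
     exists L : R * R -> R * R * R,
       is_linear L /\ filterdiff F (locally p) L /\
       (forall v, L v = zero -> v = zero)) /\
  (forall p q, U p -> U q -> F p = F q -> p = q) /\
  (forall p, U p -> forall eps : posreal, exists delta : posreal,
     forall q, U q -> ball (F p) delta (F q) -> ball p eps q).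

(* Main.v *)
Require Import Defs.
From Stdlib Require Import Reals Lra Psatz.
From Coquelicot Require Import Coquelicot.
Open Scope R_scope.


Lemma noninc (g dg : R -> R) a b : a <= b ->
  (forall s, a <= s <= b -> is_derive g s (dg s)) ->
  (forall s, a <= s <= b -> dg s <= 0) -> g b <= g a.
Proof.
  intros Hab Hd Hn. destruct (Req_dec a b) as [->|Hne]; [lra|].
  destruct (MVT_cor2 g dg a b) as [c [Hc1 Hc2]]; [lra| |].
  - intros c Hc. apply is_derive_Reals. apply Hd. lra.
  - assert (dg c <= 0) by (apply Hn; lra). nra.
Qed.

Lemma mvt_bound (f df : R -> R) a b M :
  (forall c, Rmin a b <= c <= Rmax a b -> is_derive f c (df c)) ->
  (forall c, Rmin a b <= c <= Rmax a b -> Rabs (df c) <= M) ->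
  Rabs (f b - f a) <= M * Rabs (b - a).
Proof.
  intros Hd Hb. destruct (MVT_abs f df a b) as [c [Hc1 Hc2]].
  - intros c Hc. apply is_derive_Reals. auto.
  - rewrite Hc1. apply Rmult_le_compat_r; [apply Rabs_pos|auto].
Qed.

Lemma const_zero_deriv (g : R -> R) :
  (forall s, is_derive g s 0) -> forall s, g s = g 0.
Proof.
  intros Hd s.
  assert (H1 := mvt_bound g (fun _ => 0) 0 s 0 (fun c _ => Hd c)).
  assert (H2 : Rabs (g s - g 0) <= 0 * Rabs (s - 0)).
  { apply H1. intros; rewrite Rabs_R0; lra. }
  rewrite Rmult_0_l in H2. pose proof (Rabs_pos (g s - g 0)).
  assert (Rabs (g s - g 0) = 0) by lra.
  apply Rabs_eq_0 in H0. lra.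
Qed.

Definition sig5 (w : nat -> R -> R) s :=
  Rabs (w 0%nat s) + Rabs (w 1%nat s) + Rabs (w 2%nat s) + Rabs (w 3%nat s) + Rabs (w 4%nat s).
Definition Q5 (w : nat -> R -> R) s :=
  (w 0%nat s)^2 + (w 1%nat s)^2 + (w 2%nat s)^2 + (w 3%nat s)^2 + (w 4%nat s)^2.

Lemma sq_abs x : Rabs x ^ 2 = x ^ 2.
Proof. rewrite RPow_abs. apply Rabs_pos_eq. apply pow2_ge_0. Qed.

Lemma gronwall5 (w dw : nat -> R -> R) L c S :
  0 <= L -> 0 <= c -> 0 <= S ->
  (forall i s, (i < 5)%nat -> is_derive (w i) s (dw i s)) ->
  (forall i, (i < 5)%nat -> w i 0 = 0) ->
  (forall i s, (i < 5)%nat -> 0 <= s <= S -> Rabs (dw i s) <= L * sig5 w s + c) ->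
  forall i s, (i < 5)%nat -> 0 <= s <= S ->
    Rabs (w i s) <= c * (1 + exp ((10*L+5)*S) / (10*L+5)).
Proof.
  intros HL Hc HS Hd H0 Hb.
  set (K := 10*L+5).
  assert (HK : 0 < K) by (unfold K; lra).
  set (G := fun s => (Q5 w s + c^2/K) * exp (- K * s)).
  set (dG := fun s => (2 * (w 0%nat s * dw 0%nat s + w 1%nat s * dw 1%nat s + w 2%nat s * dw 2%nat s
      + w 3%nat s * dw 3%nat s + w 4%nat s * dw 4%nat s) - K * (Q5 w s + c^2/K)) * exp (- K * s)).
  assert (HGd : forall s, is_derive G s (dG s)).
  { intros s. unfold G, dG, Q5.
    assert (D0 := Hd 0%nat s ltac:(lia)). assert (D1 := Hd 1%nat s ltac:(lia)).
    assert (D2 := Hd 2%nat s ltac:(lia)). assert (D3 := Hd 3%nat s ltac:(lia)).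
    assert (D4 := Hd 4%nat s ltac:(lia)).
    auto_derive.
    - repeat split; eexists; eauto.
    - repeat match goal with |- context [Derive (fun x => w ?i x) s] =>
        replace (Derive (fun x => w i x) s) with (dw i s) by (symmetry; apply is_derive_unique; apply Hd; lia) end.
      field. lra. }
  assert (HGn : forall s, 0 <= s <= S -> dG s <= 0).
  { intros s Hs. unfold dG. 
    assert (Hexp := exp_pos (- K * s)).
    cut (2 * (w 0%nat s * dw 0%nat s + w 1%nat s * dw 1%nat s + w 2%nat s * dw 2%nat s +
      w 3%nat s * dw 3%nat s + w 4%nat s * dw 4%nat s) - K * (Q5 w s + c ^ 2 / K) <= 0).
    { intros; nra. }
    assert (E : K * (Q5 w s + c^2/K) = K * Q5 w s + c^2) by (field; lra).
    rewrite E.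
    assert (Hs5 : forall i, (i < 5)%nat -> w i s * dw i s <= Rabs (w i s) * (L * sig5 w s + c)).
    { intros i Hi. eapply Rle_trans; [apply Rle_abs|]. rewrite Rabs_mult.
      apply Rmult_le_compat_l; [apply Rabs_pos| apply Hb; auto]. }
    pose proof (Hs5 0%nat ltac:(lia)). pose proof (Hs5 1%nat ltac:(lia)).
    pose proof (Hs5 2%nat ltac:(lia)). pose proof (Hs5 3%nat ltac:(lia)).
    pose proof (Hs5 4%nat ltac:(lia)).
    unfold Q5, K. unfold sig5 in *.
    rewrite <- (sq_abs (w 0%nat s)), <- (sq_abs (w 1%nat s)), <- (sq_abs (w 2%nat s)),
      <- (sq_abs (w 3%nat s)), <- (sq_abs (w 4%nat s)).
    set (a0 := Rabs (w 0%nat s)) in *. set (a1 := Rabs (w 1%nat s)) in *.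
    set (a2 := Rabs (w 2%nat s)) in *. set (a3 := Rabs (w 3%nat s)) in *.
    set (a4 := Rabs (w 4%nat s)) in *.
    assert (0 <= a0) by apply Rabs_pos. assert (0 <= a1) by apply Rabs_pos.
    assert (0 <= a2) by apply Rabs_pos. assert (0 <= a3) by apply Rabs_pos.
    assert (0 <= a4) by apply Rabs_pos.
    set (sg := a0 + a1 + a2 + a3 + a4) in *.
    assert (Hsq : sg^2 <= 5 * (a0^2+a1^2+a2^2+a3^2+a4^2)).
    { unfold sg.
      assert (E5 : 5 * (a0^2+a1^2+a2^2+a3^2+a4^2) - (a0 + a1 + a2 + a3 + a4)^2 =
        (a0-a1)^2+(a0-a2)^2+(a0-a3)^2+(a0-a4)^2+(a1-a2)^2+(a1-a3)^2+(a1-a4)^2+(a2-a3)^2+(a2-a4)^2+(a3-a4)^2) by ring.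
      pose proof (pow2_ge_0 (a0-a1)). pose proof (pow2_ge_0 (a0-a2)). pose proof (pow2_ge_0 (a0-a3)).
      pose proof (pow2_ge_0 (a0-a4)). pose proof (pow2_ge_0 (a1-a2)). pose proof (pow2_ge_0 (a1-a3)).
      pose proof (pow2_ge_0 (a1-a4)). pose proof (pow2_ge_0 (a2-a3)). pose proof (pow2_ge_0 (a2-a4)).
      pose proof (pow2_ge_0 (a3-a4)). lra. }
    assert (Hsum : w 0%nat s * dw 0%nat s + w 1%nat s * dw 1%nat s + w 2%nat s * dw 2%nat s +
      w 3%nat s * dw 3%nat s + w 4%nat s * dw 4%nat s <= sg * (L * sg + c)).
    { unfold sg in *. lra. }
    assert (2 * c * sg <= sg^2 + c^2) by (pose proof (pow2_ge_0 (sg - c)); lra).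
    assert (L * sg^2 <= L * (5 * (a0^2+a1^2+a2^2+a3^2+a4^2))) by (apply Rmult_le_compat_l; auto).
    assert (sg * (L * sg + c) = L * sg^2 + c * sg) by ring.
    lra. }
  intros i s Hi Hs.
  assert (HG : G s <= G 0) by (apply (noninc G dG 0 s); [lra| |]; intros; [apply HGd| apply HGn; lra]).
  unfold G in HG. unfold Q5 in HG. rewrite !H0 in HG by lia.
  replace (- K * 0) with 0 in HG by ring. rewrite exp_0 in HG.
  assert (HQ : Q5 w s <= c^2/K * exp (K * s)).
  { assert (E1 : exp (- K * s) * exp (K * s) = 1).
    { rewrite <- exp_plus. replace (- K * s + K * s) with 0 by ring. apply exp_0. }
    assert (Hp := exp_pos (K*s)).
    unfold Q5. 
    assert (0 <= c^2/K) by (apply Rmult_le_pos; [nra| left; apply Rinv_0_lt_compat; lra]).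
    set (P := (w 0%nat s)^2 + (w 1%nat s)^2 + (w 2%nat s)^2 + (w 3%nat s)^2 + (w 4%nat s)^2 + c^2/K) in *.
    assert (HP : P = (P * exp (- K * s)) * exp (K * s)) by (rewrite Rmult_assoc, E1; ring).
    assert (P <= c^2/K * exp (K*s)).
    { rewrite HP. apply Rmult_le_compat_r; [lra|]. lra. }
    unfold P in *.
    nra. }
  assert (HE : exp (K * s) <= exp (K * S)).
  { destruct (Req_dec s S) as [->|]; [lra|]. left. apply exp_increasing. nra. }
  set (E := exp (K*S)/K).
  assert (HE0 : 0 <= E) by (unfold E; apply Rmult_le_pos; [left; apply exp_pos| left; apply Rinv_0_lt_compat; lra]).
  assert (Hwi : (w i s)^2 <= c^2 * E).
  { assert ((w i s)^2 <= Q5 w s).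
    { unfold Q5. destruct i as [|[|[|[|[|]]]]]; try lia; nra. }
    assert (c^2/K * exp (K*s) <= c^2 * E).
    { unfold E. unfold Rdiv. rewrite (Rmult_comm (exp (K*S))). rewrite <- Rmult_assoc.
      apply Rmult_le_compat_l; auto. apply Rmult_le_pos; [nra|left; apply Rinv_0_lt_compat; lra]. }
    lra. }
  fold K. fold E.
  apply Rsqr_incr_0_var.
  - unfold Rsqr. rewrite <- Rabs_mult. rewrite Rabs_right by nra. nra.
  - nra.
Qed.


Lemma cont_bound (f : R -> R) a b : a <= b ->
  (forall c, a <= c <= b -> continuity_pt f c) ->
  exists M, 0 <= M /\ forall c, a <= c <= b -> Rabs (f c) <= M.
Proof.
  intros Hab Hc.
  destruct (continuity_ab_maj f a b Hab Hc) as [x1 [H1 _]].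
  destruct (continuity_ab_maj (fun x => - f x) a b Hab) as [x2 [H2 _]].
  { intros c Hc'. apply continuity_pt_opp. auto. }
  exists (Rabs (f x1) + Rabs (f x2)). split; [pose proof (Rabs_pos (f x1)); pose proof (Rabs_pos (f x2)); lra|].
  intros c Hc'. specialize (H1 c Hc'). specialize (H2 c Hc').
  pose proof (Rle_abs (f x1)) as A1. pose proof (Rle_abs (- f x2)) as A2. rewrite Rabs_Ropp in A2.
  pose proof (Rabs_pos (f x1)). pose proof (Rabs_pos (f x2)).
  unfold Rabs at 1. destruct (Rcase_abs (f c)); lra.
Qed.

Definition Ex (K B F F' dF d : R) :=
  0 <= K /\ 0 <= d /\ Rabs F <= B /\ Rabs F' <= B /\ Rabs (F' - F) <= K * d /\
  Rabs dF <= K * d /\ Rabs (F' - F - dF) <= K * d^2.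

Lemma Ex_mul K1 B1 F F' dF K2 B2 G G' dG d :
  Ex K1 B1 F F' dF d -> Ex K2 B2 G G' dG d ->
  Ex (K1*K2 + B1*K2 + B2*K1) (B1*B2) (F*G) (F'*G') (F*dG + G*dF) d.
Proof.
  intros (HK1 & Hd & HF & HF' & HF1 & HdF & HR1) (HK2 & _ & HG & HG' & HG1 & HdG & HR2).
  assert (0 <= B1) by (pose proof (Rabs_pos F); lra).
  assert (0 <= B2) by (pose proof (Rabs_pos G); lra).
  split; [assert (0<=K1*K2) by (apply Rmult_le_pos; lra); assert (0<=B1*K2) by (apply Rmult_le_pos; lra); assert (0<=B2*K1) by (apply Rmult_le_pos; lra); lra|]. split; [auto|].
  split. { rewrite Rabs_mult. apply Rmult_le_compat; auto using Rabs_pos. }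
  split. { rewrite Rabs_mult. apply Rmult_le_compat; auto using Rabs_pos. }
  assert (Hdd : 0 <= d^2) by (apply pow2_ge_0).
  split.
  { replace (F'*G' - F*G) with ((F'-F)*G' + F*(G'-G)) by ring.
    eapply Rle_trans; [apply Rabs_triang|]. rewrite !Rabs_mult.
    assert (Rabs (F'-F) * Rabs G' <= K1*d*B2) by (apply Rmult_le_compat; auto using Rabs_pos).
    assert (Rabs F * Rabs (G'-G) <= B1*(K2*d)) by (apply Rmult_le_compat; auto using Rabs_pos).
    assert (0 <= K1*K2*d) by (repeat apply Rmult_le_pos; lra).
    lra. }
  split.
  { eapply Rle_trans; [apply Rabs_triang|]. rewrite !Rabs_mult.
    assert (Rabs F * Rabs dG <= B1*(K2*d)) by (apply Rmult_le_compat; auto using Rabs_pos).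
    assert (Rabs G * Rabs dF <= B2*(K1*d)) by (apply Rmult_le_compat; auto using Rabs_pos).
    assert (0 <= K1*K2*d) by (repeat apply Rmult_le_pos; lra).
    lra. }
  replace (F'*G' - F*G - (F*dG + G*dF)) with ((F'-F)*(G'-G) + F*(G'-G-dG) + G*(F'-F-dF)) by ring.
  eapply Rle_trans; [apply Rabs_triang|]. eapply Rle_trans; [apply Rplus_le_compat_r; apply Rabs_triang|].
  rewrite !Rabs_mult.
  assert (Rabs (F'-F) * Rabs (G'-G) <= (K1*d)*(K2*d)) by (apply Rmult_le_compat; auto using Rabs_pos).
  assert (Rabs F * Rabs (G'-G-dG) <= B1*(K2*d^2)) by (apply Rmult_le_compat; auto using Rabs_pos).
  assert (Rabs G * Rabs (F'-F-dF) <= B2*(K1*d^2)) by (apply Rmult_le_compat; auto using Rabs_pos).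
  lra.
Qed.

Lemma Ex_add K1 B1 F F' dF K2 B2 G G' dG d :
  Ex K1 B1 F F' dF d -> Ex K2 B2 G G' dG d ->
  Ex (K1 + K2) (B1 + B2) (F+G) (F'+G') (dF + dG) d.
Proof.
  intros (HK1 & Hd & HF & HF' & HF1 & HdF & HR1) (HK2 & _ & HG & HG' & HG1 & HdG & HR2).
  repeat split; try lra.
  - eapply Rle_trans; [apply Rabs_triang|lra].
  - eapply Rle_trans; [apply Rabs_triang|lra].
  - replace (F'+G' - (F+G)) with ((F'-F) + (G'-G)) by ring.
    eapply Rle_trans; [apply Rabs_triang|lra].
  - eapply Rle_trans; [apply Rabs_triang|lra].
  - replace (F'+G' - (F+G) - (dF+dG)) with ((F'-F-dF) + (G'-G-dG)) by ring.
    eapply Rle_trans; [apply Rabs_triang|lra].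
Qed.

Lemma Ex_opp K B F F' dF d : Ex K B F F' dF d -> Ex K B (-F) (-F') (-dF) d.
Proof.
  intros (HK & Hd & HF & HF' & HF1 & HdF & HR). unfold Ex.
  replace (- F' - - F) with (- (F' - F)) by ring.
  replace (- (F' - F) - - dF) with (- (F' - F - dF)) by ring.
  unfold Ex. rewrite !Rabs_Ropp. repeat (split; [assumption|]). assumption.
Qed.

Lemma Ex_const c d : 0 <= d -> Ex 0 (Rabs c) c c 0 d.
Proof.
  intros Hd. unfold Ex. rewrite !Rmult_0_l.
  replace (c - c) with 0 by ring. replace (0 - 0) with 0 by ring. rewrite Rabs_R0.
  split; [apply Rle_refl|]. split; [exact Hd|]. split; [apply Rle_refl|]. split; [apply Rle_refl|].
  split; [apply Rle_refl|]. split; apply Rle_refl.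
Qed.

Lemma Ex_coord v v' B d : Rabs v <= B -> Rabs v' <= B -> Rabs (v' - v) <= d ->
  Ex 1 B v v' (v' - v) d.
Proof.
  intros H1 H2 H3. assert (0 <= d) by (pose proof (Rabs_pos (v'-v)); lra).
  unfold Ex. rewrite !Rmult_1_l.
  replace (v' - v - (v' - v)) with 0 by ring. rewrite Rabs_R0.
  split; [lra|]. split; [lra|]. split; [lra|]. split; [lra|]. split; [lra|]. split; [lra|].
  apply pow2_ge_0.
Qed.

Lemma Ex_eq K B F F' dF d F2 F2' dF2 :
  Ex K B F F' dF d -> F = F2 -> F' = F2' -> dF = dF2 -> Ex K B F2 F2' dF2 d.
Proof. intros H -> -> ->. exact H. Qed.

Lemma Ex_weak K B F F' dF d K' B' :
  Ex K B F F' dF d -> K <= K' -> B <= B' -> Ex K' B' F F' dF d.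
Proof.
  intros (HK & Hd & HF & HF' & HF1 & HdF & HR) H1 H2.
  assert (0 <= d^2) by apply pow2_ge_0.
  assert (K * d <= K' * d) by (apply Rmult_le_compat_r; lra).
  assert (K * d^2 <= K' * d^2) by (apply Rmult_le_compat_r; lra).
  unfold Ex. split; [lra|]. split; [lra|]. split; [lra|]. split; [lra|]. split; [lra|]. split; lra.
Qed.

Definition Lb (K B F dF dn : R) := 0 <= K /\ Rabs F <= B /\ Rabs dF <= K * dn.

Lemma Lb_mul K1 B1 F dF K2 B2 G dG dn :
  0 <= dn -> Lb K1 B1 F dF dn -> Lb K2 B2 G dG dn -> Lb (B1*K2 + B2*K1) (B1*B2) (F*G) (F*dG + G*dF) dn.
Proof.
  intros Hd (HK1 & HF & HdF) (HK2 & HG & HdG).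
  assert (0 <= B1) by (pose proof (Rabs_pos F); lra).
  assert (0 <= B2) by (pose proof (Rabs_pos G); lra).
  split; [nra|]. split. { rewrite Rabs_mult. apply Rmult_le_compat; auto using Rabs_pos. }
  eapply Rle_trans; [apply Rabs_triang|]. rewrite !Rabs_mult.
  assert (Rabs F * Rabs dG <= B1*(K2*dn)) by (apply Rmult_le_compat; auto using Rabs_pos).
  assert (Rabs G * Rabs dF <= B2*(K1*dn)) by (apply Rmult_le_compat; auto using Rabs_pos).
  nra.
Qed.

Lemma Lb_add K1 B1 F dF K2 B2 G dG dn :
  Lb K1 B1 F dF dn -> Lb K2 B2 G dG dn -> Lb (K1+K2) (B1+B2) (F+G) (dF+dG) dn.
Proof.
  intros (HK1 & HF & HdF) (HK2 & HG & HdG).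
  split; [lra|]. split; (eapply Rle_trans; [apply Rabs_triang|lra]).
Qed.

Lemma Lb_opp K B F dF dn : Lb K B F dF dn -> Lb K B (-F) (-dF) dn.
Proof. intros (H1 & H2 & H3). split; [auto|]. rewrite !Rabs_Ropp. auto. Qed.

Lemma Lb_const c dn : 0 <= dn -> Lb 0 (Rabs c) c 0 dn.
Proof. intros. split; [lra|]. rewrite Rabs_R0. lra. Qed.

Lemma Lb_coord v dv B dn : Rabs v <= B -> Rabs dv <= dn -> Lb 1 B v dv dn.
Proof. intros. split; [lra|]. split; lra. Qed.

Lemma Lb_eq K B F dF dn F2 dF2 : Lb K B F dF dn -> F = F2 -> dF = dF2 -> Lb K B F2 dF2 dn.
Proof. intros H -> ->. exact H. Qed.


Section Theta.
Variable theta : R -> R.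
Hypothesis Hcut : cutoff theta.

Definition th1 y := Derive theta y.
Definition th2 y := Derive (Derive theta) y.

Lemma th_D1 y : is_derive theta y (th1 y).
Proof. destruct Hcut as [Hs _]. apply Derive_correct. exact (Hs 1%nat y). Qed.

Lemma th_D2 y : is_derive th1 y (th2 y).
Proof. destruct Hcut as [Hs _]. unfold th1, th2. apply Derive_correct. exact (Hs 2%nat y). Qed.

Lemma th_C2 y : continuity_pt th2 y.
Proof.
  destruct Hcut as [Hs _]. apply continuity_pt_filterlim. apply (ex_derive_continuous (K := R_AbsRing) (V := R_NormedModule)).
  exact (Hs 3%nat y).
Qed.

Lemma th_C1 y : continuity_pt th1 y.
Proof. apply continuity_pt_filterlim. apply (ex_derive_continuous (K := R_AbsRing) (V := R_NormedModule)). eexists. apply th_D2. Qed.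

Lemma th01 y : 0 <= theta y <= 1.
Proof. destruct Hcut as (_ & H & _). apply H. Qed.

Lemma th_bounds R : 0 <= R -> exists M, 0 <= M /\ forall y, Rabs y <= R -> Rabs (th1 y) <= M /\ Rabs (th2 y) <= M.
Proof.
  intros HR.
  destruct (cont_bound th1 (-R) R ltac:(lra)) as [M1 [HM1 H1]]. { intros; apply th_C1. }
  destruct (cont_bound th2 (-R) R ltac:(lra)) as [M2 [HM2 H2]]. { intros; apply th_C2. }
  exists (M1 + M2). split; [lra|]. intros y Hy. apply Rabs_le_between in Hy.
  specialize (H1 y ltac:(lra)). specialize (H2 y ltac:(lra)). lra.
Qed.

Lemma seg_in R a b c : Rabs a <= R -> Rabs b <= R -> Rmin a b <= c <= Rmax a b -> Rabs c <= R.
Proof.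
  intros Ha Hb Hc. apply Rabs_le_between in Ha. apply Rabs_le_between in Hb.
  apply Rabs_le_between. unfold Rmin, Rmax in Hc. destruct (Rle_dec a b); lra.
Qed.

Lemma seg_dist a b c : Rmin a b <= c <= Rmax a b -> Rabs (c - a) <= Rabs (b - a).
Proof.
  intros Hc. unfold Rmin, Rmax in Hc. destruct (Rle_dec a b).
  - rewrite !Rabs_right; lra.
  - rewrite !Rabs_left1; lra.
Qed.

Lemma Ex_theta Rr M y y' d : 0 <= M ->
  (forall v, Rabs v <= Rr -> Rabs (th1 v) <= M /\ Rabs (th2 v) <= M) ->
  Rabs y <= Rr -> Rabs y' <= Rr -> Rabs (y' - y) <= d ->
  Ex M 1 (theta y) (theta y') (th1 y * (y' - y)) d.
Proof.
  intros HM HB Hy Hy' Hd.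
  assert (0 <= d) by (pose proof (Rabs_pos (y'-y)); lra).
  assert (Hyd : Rabs (y' - y) * Rabs (y'-y) <= d^2).
  { apply Rsqr_incr_1 in Hd; [|apply Rabs_pos|lra]. unfold Rsqr in Hd. nra. }
  split; [lra|]. split; [lra|].
  split. { pose proof (th01 y). rewrite Rabs_right; lra. }
  split. { pose proof (th01 y'). rewrite Rabs_right; lra. }
  split.
  { eapply Rle_trans. apply (mvt_bound theta th1 y y' M).
    - intros; apply th_D1.
    - intros c Hc. apply HB. apply (seg_in Rr y y'); auto.
    - apply Rmult_le_compat_l; auto. }
  split.
  { rewrite Rabs_mult. apply Rmult_le_compat; auto using Rabs_pos. apply HB; auto. }
  replace (theta y' - theta y - th1 y * (y' - y)) with
     ((theta y' - th1 y * y') - (theta y - th1 y * y)) by ring.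
  eapply Rle_trans. apply (mvt_bound (fun v => theta v - th1 y * v) (fun v => th1 v - th1 y) y y' (M * Rabs (y'-y))).
  - intros c _.
    replace (th1 c - th1 y) with (th1 c - th1 y * 1) by ring.
    apply (is_derive_minus theta (fun v => th1 y * v)); [apply th_D1|].
    auto_derive; [auto|ring].
  - intros c Hc. eapply Rle_trans. apply (mvt_bound th1 th2 y c M).
    + intros; apply th_D2.
    + intros c' Hc'. apply HB. apply (seg_in Rr y c); auto. apply (seg_in Rr y y'); auto.
    + apply Rmult_le_compat_l; auto. apply seg_dist; auto.
  - rewrite Rmult_assoc. apply Rmult_le_compat_l; auto.
Qed.

Lemma Lb_theta Rr M y dy dn : 0 <= M ->
  (forall v, Rabs v <= Rr -> Rabs (th1 v) <= M /\ Rabs (th2 v) <= M) ->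
  Rabs y <= Rr -> Rabs dy <= dn -> Lb M 1 (theta y) (th1 y * dy) dn.
Proof.
  intros HM HB Hy Hd. split; [auto|]. split.
  - pose proof (th01 y). rewrite Rabs_right; lra.
  - rewrite Rabs_mult. apply Rmult_le_compat; auto using Rabs_pos. apply HB; auto.
Qed.

End Theta.


Section Model.
Variable theta : R -> R.
Hypothesis Hcut : cutoff theta.

Definition aF x y := theta y + 2 * x * theta (1 - y).
Definition daF x y dx dy := th1 theta y * dy + 2 * dx * theta (1 - y) - 2 * x * th1 theta (1 - y) * dy.
Definition AF x y := x * theta y + x^2 * theta (1 - y).
Definition dAF x y dx dy := dx * theta y + x * th1 theta y * dy + 2 * x * dx * theta (1 - y)
   - x^2 * th1 theta (1 - y) * dy.

Definition Fm (i : nat) (x y p h z al : R) : R :=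
  match i with
  | 0%nat => p
  | 1%nat => h
  | 2%nat => - (al * h * aF x y)
  | 3%nat => al * p * aF x y
  | _ => h * AF x y
  end.

Definition dFm (i : nat) (x y p h z al dx dy dp dh dz dal : R) : R :=
  match i with
  | 0%nat => dp
  | 1%nat => dh
  | 2%nat => - (dal * h * aF x y + al * dh * aF x y + al * h * daF x y dx dy)
  | 3%nat => dal * p * aF x y + al * dp * aF x y + al * p * daF x y dx dy
  | _ => dh * AF x y + h * dAF x y dx dy
  end.

Lemma dFm_lin i x y p h z al dx dy dp dh dz dal ex ey ep eh ez eal c e :
  dFm i x y p h z al (c*dx + e*ex) (c*dy+e*ey) (c*dp+e*ep) (c*dh+e*eh) (c*dz+e*ez) (c*dal+e*eal) =
  c * dFm i x y p h z al dx dy dp dh dz dal + e * dFm i x y p h z al ex ey ep eh ez eal.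
Proof. destruct i as [|[|[|[|i]]]]; simpl; unfold daF, dAF; ring. Qed.

Definition box Rr x y p h al := Rabs x <= Rr /\ Rabs y <= Rr /\ Rabs p <= 1 /\ Rabs h <= 1 /\ Rabs al <= 1.

Definition dist6 x y p h z al x' y' p' h' z' al' :=
  Rabs (x'-x) + Rabs (y'-y) + Rabs (p'-p) + Rabs (h'-h) + Rabs (z'-z) + Rabs (al'-al).

Lemma F_exp Rr : 0 <= Rr -> exists K, 0 <= K /\
  forall x y p h z al x' y' p' h' z' al', box Rr x y p h al -> box Rr x' y' p' h' al' ->
  forall i, (i < 5)%nat ->
  Ex K K (Fm i x y p h z al) (Fm i x' y' p' h' z' al')
     (dFm i x y p h z al (x'-x) (y'-y) (p'-p) (h'-h) (z'-z) (al'-al))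
     (dist6 x y p h z al x' y' p' h' z' al').
Proof.
  intros HR.
  destruct (th_bounds theta Hcut (Rr+1) ltac:(lra)) as [M [HM HB]].
  assert (GEN : exists Ka Ba Kb Bb KA BA,
    forall x y p h z al x' y' p' h' z' al', box Rr x y p h al -> box Rr x' y' p' h' al' ->
    let d := dist6 x y p h z al x' y' p' h' z' al' in
    Ex Ka Ba (aF x y) (aF x' y') (daF x y (x'-x) (y'-y)) d /\
    Ex Kb Bb (al * h) (al' * h') (al * (h'-h) + h * (al'-al)) d /\
    Ex KA BA (AF x y) (AF x' y') (dAF x y (x'-x) (y'-y)) d).
  { do 6 eexists. intros x y p h z al x' y' p' h' z' al' (Hx&Hy&Hp&Hh&Hal) (Hx'&Hy'&Hp'&Hh'&Hal') d.
    assert (Hd : 0 <= d) by (unfold d, dist6; pose proof (Rabs_pos (x'-x)); pose proof (Rabs_pos (y'-y));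
      pose proof (Rabs_pos (p'-p)); pose proof (Rabs_pos (h'-h)); pose proof (Rabs_pos (z'-z));
      pose proof (Rabs_pos (al'-al)); lra).
    assert (Dx : Rabs (x'-x) <= d) by (unfold d, dist6; pose proof (Rabs_pos (y'-y));
      pose proof (Rabs_pos (p'-p)); pose proof (Rabs_pos (h'-h)); pose proof (Rabs_pos (z'-z));
      pose proof (Rabs_pos (al'-al)); lra).
    assert (Dy : Rabs (y'-y) <= d) by (unfold d, dist6; pose proof (Rabs_pos (x'-x));
      pose proof (Rabs_pos (p'-p)); pose proof (Rabs_pos (h'-h)); pose proof (Rabs_pos (z'-z));
      pose proof (Rabs_pos (al'-al)); lra).
    assert (Dh : Rabs (h'-h) <= d) by (unfold d, dist6; pose proof (Rabs_pos (x'-x));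
      pose proof (Rabs_pos (p'-p)); pose proof (Rabs_pos (y'-y)); pose proof (Rabs_pos (z'-z));
      pose proof (Rabs_pos (al'-al)); lra).
    assert (Dal : Rabs (al'-al) <= d) by (unfold d, dist6; pose proof (Rabs_pos (x'-x));
      pose proof (Rabs_pos (p'-p)); pose proof (Rabs_pos (h'-h)); pose proof (Rabs_pos (z'-z));
      pose proof (Rabs_pos (y'-y)); lra).
    assert (Dy1 : Rabs ((1-y')-(1-y)) <= d) by (replace ((1-y')-(1-y)) with (-(y'-y)) by ring; rewrite Rabs_Ropp; lra).
    assert (Ry : Rabs y <= Rr+1) by lra. assert (Ry' : Rabs y' <= Rr+1) by lra.
    assert (R1y : Rabs (1-y) <= Rr+1) by (eapply Rle_trans; [apply Rabs_triang|]; rewrite Rabs_Ropp, Rabs_R1; lra).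
    assert (R1y' : Rabs (1-y') <= Rr+1) by (eapply Rle_trans; [apply Rabs_triang|]; rewrite Rabs_Ropp, Rabs_R1; lra).
    pose proof (Ex_theta theta Hcut (Rr+1) M y y' d HM HB Ry Ry' Dy) as T1.
    pose proof (Ex_theta theta Hcut (Rr+1) M (1-y) (1-y') d HM HB R1y R1y' Dy1) as T2.
    pose proof (Ex_coord x x' Rr d Hx Hx' Dx) as EX.
    pose proof (Ex_coord h h' 1 d Hh Hh' Dh) as EH.
    pose proof (Ex_coord al al' 1 d Hal Hal' Dal) as EAL.
    pose proof (Ex_const 2 d Hd) as E2.
    pose proof (Ex_mul _ _ _ _ _ _ _ _ _ _ _ E2 EX) as E2x.
    pose proof (Ex_mul _ _ _ _ _ _ _ _ _ _ _ E2x T2) as E2xT.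
    pose proof (Ex_add _ _ _ _ _ _ _ _ _ _ _ T1 E2xT) as EaF.
    pose proof (Ex_mul _ _ _ _ _ _ _ _ _ _ _ EAL EH) as Ealh.
    pose proof (Ex_mul _ _ _ _ _ _ _ _ _ _ _ EX T1) as ExT.
    pose proof (Ex_mul _ _ _ _ _ _ _ _ _ _ _ EX EX) as Exx.
    pose proof (Ex_mul _ _ _ _ _ _ _ _ _ _ _ Exx T2) as ExxT.
    pose proof (Ex_add _ _ _ _ _ _ _ _ _ _ _ ExT ExxT) as EAF.
    split; [|split].
    - eapply Ex_eq; [exact EaF| unfold aF; ring | unfold aF; ring | unfold daF; ring].
    - eapply Ex_eq; [exact Ealh| ring | ring | ring].
    - eapply Ex_eq; [exact EAF| unfold AF; ring | unfold AF; ring | unfold dAF; ring]. }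
  destruct GEN as (Ka & Ba & Kb & Bb & KA & BA & G).
  destruct (G 0 0 0 0 0 0 0 0 0 0 0 0) as ((Ka0 & _ & Ba0 & _) & (Kb0 & _ & Bb0 & _) & (KA0 & _ & BA0 & _));
    try (unfold box; rewrite Rabs_R0; lra).
  assert (0 <= Ba) by (pose proof (Rabs_pos (aF 0 0)); lra).
  assert (0 <= Bb) by (pose proof (Rabs_pos (0*0)); lra).
  assert (0 <= BA) by (pose proof (Rabs_pos (AF 0 0)); lra).
  set (S := 1 + Ka + Ba + Kb + Bb + KA + BA).
  assert (HS : forall a b, 0 <= a <= S -> 0 <= b <= S -> a * b <= S^2).
  { intros a b Ha Hb. replace (S^2) with (S*S) by ring. apply Rmult_le_compat; lra. }
  assert (S1 : 1 <= S) by (unfold S; lra).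
  exists (10 * S^2). split; [nra|].
  intros x y p h z al x' y' p' h' z' al' Hb Hb' i Hi.
  destruct (G x y p h z al x' y' p' h' z' al' Hb Hb') as (EaF & Ealh & EAF).
  set (d := dist6 x y p h z al x' y' p' h' z' al') in *.
  destruct Hb as (Hx&Hy&Hp&Hh&Hal). destruct Hb' as (Hx'&Hy'&Hp'&Hh'&Hal').
  assert (Hd : 0 <= d) by (unfold d, dist6; pose proof (Rabs_pos (x'-x)); pose proof (Rabs_pos (y'-y));
      pose proof (Rabs_pos (p'-p)); pose proof (Rabs_pos (h'-h)); pose proof (Rabs_pos (z'-z));
      pose proof (Rabs_pos (al'-al)); lra).
  assert (Dp : Rabs (p'-p) <= d) by (unfold d, dist6; pose proof (Rabs_pos (x'-x));
      pose proof (Rabs_pos (y'-y)); pose proof (Rabs_pos (h'-h)); pose proof (Rabs_pos (z'-z));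
      pose proof (Rabs_pos (al'-al)); lra).
  assert (Dh : Rabs (h'-h) <= d) by (unfold d, dist6; pose proof (Rabs_pos (x'-x));
      pose proof (Rabs_pos (p'-p)); pose proof (Rabs_pos (y'-y)); pose proof (Rabs_pos (z'-z));
      pose proof (Rabs_pos (al'-al)); lra).
  assert (Dal : Rabs (al'-al) <= d) by (unfold d, dist6; pose proof (Rabs_pos (x'-x));
      pose proof (Rabs_pos (p'-p)); pose proof (Rabs_pos (h'-h)); pose proof (Rabs_pos (z'-z));
      pose proof (Rabs_pos (y'-y)); lra).
  pose proof (Ex_coord p p' 1 d Hp Hp' Dp) as EP.
  pose proof (Ex_coord h h' 1 d Hh Hh' Dh) as EH.
  pose proof (Ex_coord al al' 1 d Hal Hal' Dal) as EAL.
  assert (S2 : 1 <= S^2) by nra.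
  destruct i as [|[|[|[|[|i]]]]]; try lia; simpl.
  - eapply Ex_weak; [exact EP| lra | lra].
  - eapply Ex_weak; [exact EH| lra | lra].
  - pose proof (Ex_opp _ _ _ _ _ _ (Ex_mul _ _ _ _ _ _ _ _ _ _ _ Ealh EaF)) as E.
    eapply Ex_weak; [eapply Ex_eq; [exact E| ring | ring | ring] | | ].
    + assert (Kb*Ka <= S^2) by (apply HS; unfold S; lra).
      assert (Bb*Ka <= S^2) by (apply HS; unfold S; lra).
      assert (Ba*Kb <= S^2) by (apply HS; unfold S; lra). lra.
    + assert (Bb*Ba <= S^2) by (apply HS; unfold S; lra). lra.
  - pose proof (Ex_mul _ _ _ _ _ _ _ _ _ _ _ (Ex_mul _ _ _ _ _ _ _ _ _ _ _ EAL EP) EaF) as E.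
    eapply Ex_weak; [eapply Ex_eq; [exact E| ring | ring | ring] | | ].
    + assert ((1*1+1*1+1*1)*Ka <= 3 * S^2) by (assert (Ka <= S^2) by (unfold S in *; nra); lra).
      assert (1*1*Ka <= S^2) by (assert (Ka <= S^2) by (unfold S in *; nra); lra).
      assert (Ba*(1*1+1*1+1*1) <= 3 * S^2) by (assert (Ba <= S^2) by (unfold S in *; nra); lra). lra.
    + assert (Ba <= S^2) by (unfold S in *; nra). lra.
  - pose proof (Ex_mul _ _ _ _ _ _ _ _ _ _ _ EH EAF) as E.
    eapply Ex_weak; [eapply Ex_eq; [exact E| ring | ring | ring] | | ].
    + assert (KA <= S^2) by (unfold S in *; nra).
      assert (BA <= S^2) by (unfold S in *; nra). lra.
    + assert (BA <= S^2) by (unfold S in *; nra). lra.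
Qed.

Definition nrm6 dx dy dp dh dz dal := Rabs dx + Rabs dy + Rabs dp + Rabs dh + Rabs dz + Rabs dal.

Lemma dF_lin Rr : 0 <= Rr -> exists K, 0 <= K /\
  forall x y p h z al dx dy dp dh dz dal, box Rr x y p h al ->
  forall i, (i < 5)%nat ->
  Rabs (dFm i x y p h z al dx dy dp dh dz dal) <= K * nrm6 dx dy dp dh dz dal.
Proof.
  intros HR.
  destruct (th_bounds theta Hcut (Rr+1) ltac:(lra)) as [M [HM HB]].
  assert (GEN : exists Ka Ba KA BA,
    forall x y p h z al dx dy dp dh dz dal : R, box Rr x y p h al ->
    let d := nrm6 dx dy dp dh dz dal in
    Lb Ka Ba (aF x y) (daF x y dx dy) d /\ Lb KA BA (AF x y) (dAF x y dx dy) d).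
  { do 4 eexists. intros x y p h z al dx dy dp dh dz dal (Hx&Hy&Hp&Hh&Hal) d.
    assert (Hd : 0 <= d) by (unfold d, nrm6; pose proof (Rabs_pos dx); pose proof (Rabs_pos dy);
      pose proof (Rabs_pos dp); pose proof (Rabs_pos dh); pose proof (Rabs_pos dz);
      pose proof (Rabs_pos dal); lra).
    assert (Dx : Rabs dx <= d) by (unfold d, nrm6; pose proof (Rabs_pos dy);
      pose proof (Rabs_pos dp); pose proof (Rabs_pos dh); pose proof (Rabs_pos dz);
      pose proof (Rabs_pos dal); lra).
    assert (Dy : Rabs dy <= d) by (unfold d, nrm6; pose proof (Rabs_pos dx);
      pose proof (Rabs_pos dp); pose proof (Rabs_pos dh); pose proof (Rabs_pos dz);
      pose proof (Rabs_pos dal); lra).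
    assert (Dy1 : Rabs (-dy) <= d) by (rewrite Rabs_Ropp; lra).
    assert (Ry : Rabs y <= Rr+1) by lra.
    assert (R1y : Rabs (1-y) <= Rr+1) by (eapply Rle_trans; [apply Rabs_triang|]; rewrite Rabs_Ropp, Rabs_R1; lra).
    pose proof (Lb_theta theta Hcut (Rr+1) M y dy d HM HB Ry Dy) as T1.
    pose proof (Lb_theta theta Hcut (Rr+1) M (1-y) (-dy) d HM HB R1y Dy1) as T2.
    pose proof (Lb_coord x dx Rr d Hx Dx) as EX.
    pose proof (Lb_const 2 d Hd) as E2.
    pose proof (Lb_mul _ _ _ _ _ _ _ _ _ Hd E2 EX) as E2x.
    pose proof (Lb_mul _ _ _ _ _ _ _ _ _ Hd E2x T2) as E2xT.
    pose proof (Lb_add _ _ _ _ _ _ _ _ _ T1 E2xT) as EaF.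
    pose proof (Lb_mul _ _ _ _ _ _ _ _ _ Hd EX T1) as ExT.
    pose proof (Lb_mul _ _ _ _ _ _ _ _ _ Hd EX EX) as Exx.
    pose proof (Lb_mul _ _ _ _ _ _ _ _ _ Hd Exx T2) as ExxT.
    pose proof (Lb_add _ _ _ _ _ _ _ _ _ ExT ExxT) as EAF.
    split.
    - eapply Lb_eq; [exact EaF| unfold aF; ring | unfold daF; ring].
    - eapply Lb_eq; [exact EAF| unfold AF; ring | unfold dAF; ring]. }
  destruct GEN as (Ka & Ba & KA & BA & G).
  destruct (G 0 0 0 0 0 0 0 0 0 0 0 0) as ((Ka0 & Ba0 & _) & (KA0 & BA0 & _));
    try (unfold box; rewrite Rabs_R0; lra).
  assert (0 <= Ba) by (pose proof (Rabs_pos (aF 0 0)); lra).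
  assert (0 <= BA) by (pose proof (Rabs_pos (AF 0 0)); lra).
  set (S := 1 + Ka + Ba + KA + BA).
  assert (S1 : 1 <= S) by (unfold S; lra).
  exists (10 * S). split; [lra|].
  intros x y p h z al dx dy dp dh dz dal Hb i Hi.
  destruct (G x y p h z al dx dy dp dh dz dal Hb) as (EaF & EAF).
  set (d := nrm6 dx dy dp dh dz dal) in *.
  destruct Hb as (Hx&Hy&Hp&Hh&Hal).
  assert (Hd : 0 <= d) by (unfold d, nrm6; pose proof (Rabs_pos dx); pose proof (Rabs_pos dy);
      pose proof (Rabs_pos dp); pose proof (Rabs_pos dh); pose proof (Rabs_pos dz);
      pose proof (Rabs_pos dal); lra).
  assert (Dp : Rabs dp <= d) by (unfold d, nrm6; pose proof (Rabs_pos dy);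
      pose proof (Rabs_pos dx); pose proof (Rabs_pos dh); pose proof (Rabs_pos dz);
      pose proof (Rabs_pos dal); lra).
  assert (Dh : Rabs dh <= d) by (unfold d, nrm6; pose proof (Rabs_pos dy);
      pose proof (Rabs_pos dp); pose proof (Rabs_pos dx); pose proof (Rabs_pos dz);
      pose proof (Rabs_pos dal); lra).
  assert (Dal : Rabs dal <= d) by (unfold d, nrm6; pose proof (Rabs_pos dy);
      pose proof (Rabs_pos dp); pose proof (Rabs_pos dh); pose proof (Rabs_pos dz);
      pose proof (Rabs_pos dx); lra).
  pose proof (Lb_coord p dp 1 d Hp Dp) as EP.
  pose proof (Lb_coord h dh 1 d Hh Dh) as EH.
  pose proof (Lb_coord al dal 1 d Hal Dal) as EAL.
  assert (Hfin : forall K B F dF, Lb K B F dF d -> K <= 10 * S -> Rabs dF <= 10 * S * d).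
  { intros K B F dF (HK & _ & HH) HKS. eapply Rle_trans; [exact HH|]. apply Rmult_le_compat_r; lra. }
  assert (HdS : d <= 10 * S * d) by nra.
  destruct i as [|[|[|[|[|i]]]]]; try lia; simpl.
  - lra.
  - lra.
  - pose proof (Lb_opp _ _ _ _ _ (Lb_mul _ _ _ _ _ _ _ _ _ Hd (Lb_mul _ _ _ _ _ _ _ _ _ Hd EAL EH) EaF)) as E.
    eapply Hfin; [eapply Lb_eq; [exact E| reflexivity | ring] |].
    unfold S in *; nra.
  - pose proof (Lb_mul _ _ _ _ _ _ _ _ _ Hd (Lb_mul _ _ _ _ _ _ _ _ _ Hd EAL EP) EaF) as E.
    eapply Hfin; [eapply Lb_eq; [exact E| reflexivity | ring] |].
    unfold S in *; nra.
  - pose proof (Lb_mul _ _ _ _ _ _ _ _ _ Hd EH EAF) as E.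
    eapply Hfin; [eapply Lb_eq; [exact E| reflexivity | ring] |].
    unfold S in *; nra.
Qed.

End Model.


Section Ham.
Variable theta : R -> R.
Hypothesis Hcut : cutoff theta.

Lemma dH_px x y z px py pz : Derive (fun v => Ham theta x y z v py pz) px = px.
Proof. apply is_derive_unique. unfold Ham. auto_derive. all: try (now auto). all: try ring. all: try field. Qed.

Lemma dH_py x y z px py pz : Derive (fun v => Ham theta x y z px v pz) py = py + Afun theta x y * pz.
Proof. apply is_derive_unique. unfold Ham. auto_derive. all: try (now auto). all: try ring. all: try field. Qed.

Lemma dH_pz x y z px py pz : Derive (fun v => Ham theta x y z px py v) pz = (py + Afun theta x y * pz) * Afun theta x y.
Proof. apply is_derive_unique. unfold Ham. auto_derive. all: try (now auto). all: try ring. all: try field. Qed.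

Lemma dH_z x y z px py pz : Derive (fun v => Ham theta x y v px py pz) z = 0.
Proof. unfold Ham. apply Derive_const. Qed.

Lemma dH_x x y z px py pz : Derive (fun v => Ham theta v y z px py pz) x =
  (py + Afun theta x y * pz) * pz * aF theta x y.
Proof. apply is_derive_unique. unfold Ham, Afun, aF. auto_derive. all: try (now auto). all: field. Qed.

Lemma dH_y x y z px py pz : Derive (fun v => Ham theta x v z px py pz) y =
  (py + Afun theta x y * pz) * pz * (x * th1 theta y - x^2 * th1 theta (1 - y)).
Proof.
  apply is_derive_unique. unfold Ham, Afun.
  auto_derive.
  - split; [eexists; apply th_D1; auto|]. split; [eexists; apply th_D1; auto|]. auto.
  - replace (1 + - y) with (1 - y) by ring. change (Derive (fun x => theta x)) with (Derive theta). unfold th1. field.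
Qed.

End Ham.


Lemma sumsq_derive (f g : R -> R) x df dg : is_derive f x df -> is_derive g x dg ->
  is_derive (fun t => f t ^ 2 + g t ^ 2) x (2 * f x * df + 2 * g x * dg).
Proof.
  intros Hf Hg. auto_derive.
  - split; [eexists; exact Hf|]. split; [eexists; exact Hg|]. auto.
  - replace (Derive (fun t => f t) x) with df by (symmetry; apply is_derive_unique; exact Hf).
    replace (Derive (fun t => g t) x) with dg by (symmetry; apply is_derive_unique; exact Hg). ring.
Qed.

Lemma diffq_derive (f1 f2 f3 f4 : R -> R) x a1 a2 a3 a4 h k :
  is_derive f1 x a1 -> is_derive f2 x a2 -> is_derive f3 x a3 -> is_derive f4 x a4 ->
  is_derive (fun t => (f1 t - f2 t) / h - (f3 t - f4 t) / k) x ((a1 - a2) / h - (a3 - a4) / k).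
Proof.
  intros H1 H2 H3 H4. auto_derive.
  - repeat split; eexists; eassumption.
  - replace (Derive (fun t => f1 t) x) with a1 by (symmetry; apply is_derive_unique; auto).
    replace (Derive (fun t => f2 t) x) with a2 by (symmetry; apply is_derive_unique; auto).
    replace (Derive (fun t => f3 t) x) with a3 by (symmetry; apply is_derive_unique; auto).
    replace (Derive (fun t => f4 t) x) with a4 by (symmetry; apply is_derive_unique; auto).
    unfold Rdiv. ring.
Qed.

Lemma is_derive_eq (f : R -> R) (x l l' : R) : is_derive f x l -> l = l' -> is_derive f x l'.
Proof. intros H <-. exact H. Qed.

Lemma is_derive_divc (f : R -> R) (x df c : R) : is_derive f x df -> is_derive (fun t => f t / c) x (df / c).
Proof.
  intros H. auto_derive. - eexists; exact H.
  - replace (Derive (fun t => f t) x) with df by (symmetry; apply is_derive_unique; exact H). unfold Rdiv; ring.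
Qed.

Lemma cmp_deriv (f df G dG : R -> R) a b : a <= b ->
  (forall s, a <= s <= b -> is_derive f s (df s)) ->
  (forall s, a <= s <= b -> is_derive G s (dG s)) ->
  (forall s, a <= s <= b -> df s <= dG s) -> f b - G b <= f a - G a.
Proof.
  intros Hab Hf HG Hle.
  apply (noninc (fun s => f s - G s) (fun s => df s - dG s) a b Hab).
  - intros s Hs. apply (is_derive_minus f G); auto.
  - intros s Hs. specialize (Hle s Hs). lra.
Qed.

Lemma small_lin A b : 0 <= A -> 0 < b -> A * (b / (A + 1)) <= b.
Proof.
  intros HA Hb. unfold Rdiv. rewrite <- Rmult_assoc, (Rmult_comm A b), Rmult_assoc.
  rewrite <- (Rmult_1_r b) at 2. apply Rmult_le_compat_l; [lra|].
  apply (Rmult_le_reg_r (A+1)); [lra|]. rewrite Rmult_assoc, Rinv_l by lra. lra.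
Qed.

Lemma alg2 c Cv eps e1 e2 e3 v w a b m : 0 < c -> 0 <= Cv -> 0 <= eps <= 1/2 ->
  eps * (1 + 2 * Cv) <= c / 2 -> Rabs e1 <= eps -> Rabs e2 <= eps -> Rabs e3 <= eps ->
  v <= - c -> Rabs w <= Cv ->
  Rabs (e1 * a + (v + e2) * b) <= m -> Rabs ((1 + e3) * a + w * b) <= m ->
  Rabs a <= (2 + 4 / c + 8 * Cv / c) * m /\ Rabs b <= (2 + 4 / c + 8 * Cv / c) * m.
Proof.
  intros Hc HCv Heps Heps2 H1 H2 H3 Hv Hw HX HY.
  assert (Heps3 : eps <= c/2) by (assert (0 <= eps * Cv) by (apply Rmult_le_pos; lra); lra).
  set (A := Rabs a). set (B := Rabs b).
  assert (HA : 0 <= A) by apply Rabs_pos. assert (HB : 0 <= B) by apply Rabs_pos.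
  assert (Hm : 0 <= m) by (pose proof (Rabs_pos ((1 + e3) * a + w * b)); lra).
  assert (Y1 : (1 - eps) * A <= m + Cv * B).
  { assert (Rabs ((1 + e3) * a) <= m + Rabs (w * b)).
    { replace ((1 + e3) * a) with (((1 + e3) * a + w * b) - w * b) by ring.
      eapply Rle_trans; [apply Rabs_triang|]. rewrite Rabs_Ropp. lra. }
    rewrite !Rabs_mult in H. 
    assert (1 - eps <= Rabs (1 + e3)).
    { apply Rabs_le_between in H3. rewrite Rabs_right; lra. }
    assert (Rabs w * Rabs b <= Cv * B) by (apply Rmult_le_compat_r; auto).
    assert ((1 - eps) * A <= Rabs (1 + e3) * A) by (apply Rmult_le_compat_r; auto).
    fold A in H. lra. }
  assert (Y2 : A <= 2 * (m + Cv * B)).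
  { assert (0 <= (1 - 2*eps) * A) by (apply Rmult_le_pos; lra). lra. }
  assert (X1 : (c - eps) * B <= m + eps * A).
  { assert (Rabs ((v + e2) * b) <= m + Rabs (e1 * a)).
    { replace ((v + e2) * b) with ((e1 * a + (v + e2) * b) - e1 * a) by ring.
      eapply Rle_trans; [apply Rabs_triang|]. rewrite Rabs_Ropp. lra. }
    rewrite !Rabs_mult in H.
    assert (c - eps <= Rabs (v + e2)).
    { apply Rabs_le_between in H2. rewrite Rabs_left1; lra. }
    assert (Rabs e1 * Rabs a <= eps * A) by (apply Rmult_le_compat_r; auto).
    assert ((c - eps) * B <= Rabs (v + e2) * B) by (apply Rmult_le_compat_r; auto).
    fold B in H. lra. }
  assert (X2 : (c / 2) * B <= 2 * m).
  { assert (eps * A <= eps * (2 * (m + Cv * B))) by (apply Rmult_le_compat_l; lra).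
    assert (0 <= (1 - 2*eps) * m) by (apply Rmult_le_pos; lra).
    assert (eps * (1 + 2 * Cv) * B <= c / 2 * B) by (apply Rmult_le_compat_r; lra).
    lra. }
  assert (HBm : B <= 4 / c * m).
  { apply (Rmult_le_reg_l (c/2)); [lra|]. replace (c / 2 * (4 / c * m)) with (2 * m) by (field; lra). lra. }
  assert (HAm : A <= 2 * m + 8 * Cv / c * m).
  { assert (Cv * B <= Cv * (4 / c * m)) by (apply Rmult_le_compat_l; auto).
    replace (8 * Cv / c * m) with (2 * (Cv * (4 / c * m))) by (field; lra). lra. }
  assert (0 <= 4 / c * m) by (apply Rmult_le_pos; [left; apply Rdiv_lt_0_compat|]; lra).
  assert (0 <= 8 * Cv / c * m) by (apply Rmult_le_pos; [apply Rmult_le_pos; [lra| left; apply Rinv_0_lt_compat; lra]|]; lra).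
  split; nra.
Qed.

Lemma filterdiff_pair {K : AbsRing} {U V W : NormedModule K} (F : (U -> Prop) -> Prop) {FF : Filter F}
  (f : U -> V) (g : U -> W) lf lg :
  filterdiff f F lf -> filterdiff g F lg -> filterdiff (fun x => (f x, g x)) F (fun x => (lf x, lg x)).
Proof.
  intros Hf Hg.
  apply (filterdiff_comp_2 f g (fun a b => (a, b)) lf lg (fun a b => (a, b))); auto.
  eapply filterdiff_ext_lin; [eapply filterdiff_ext; [|apply filterdiff_id]|].
  - intros [a b]; reflexivity.
  - intros [a b]; reflexivity.
Qed.

Lemma shift_derive (g : R -> R) (x T l : R) : is_derive g (x + T) l -> is_derive (fun z => g (z + T)) x l.
Proof.
  intros H. apply (is_derive_eq _ _ (1 * l)); [|ring].
  apply (is_derive_comp g (fun z => z + T)); auto.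
  auto_derive; auto; ring.
Qed.

Lemma open_box t r : open (fun q : R * R => Rabs (fst q - t) < r /\ Rabs (snd q) < r).
Proof.
  intros [x1 x2] [H1 H2]. simpl in H1, H2.
  assert (Hp : 0 < Rmin (r - Rabs (x1 - t)) (r - Rabs x2)) by (apply Rmin_pos; lra).
  exists (mkposreal _ Hp). intros [y1 y2] [B1 B2]. simpl in *.
  unfold ball in B1, B2; simpl in B1, B2. unfold AbsRing_ball, abs, minus, plus, opp in B1, B2; simpl in B1, B2.
  pose proof (Rmin_l (r - Rabs (x1 - t)) (r - Rabs x2)). pose proof (Rmin_r (r - Rabs (x1 - t)) (r - Rabs x2)).
  split.
  - replace (y1 - t) with ((y1 - x1) + (x1 - t)) by ring. eapply Rle_lt_trans; [apply Rabs_triang|].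
    unfold Rminus in *. lra.
  - replace y2 with ((y2 - x2) + x2) by ring. eapply Rle_lt_trans; [apply Rabs_triang|].
    unfold Rminus in *. lra.
Qed.

Lemma mvt_eq (f df : R -> R) a b :
  (forall x, Rmin a b <= x <= Rmax a b -> is_derive f x (df x)) ->
  exists c, Rmin a b <= c <= Rmax a b /\ f b - f a = df c * (b - a).
Proof.
  intros Hd. destruct (MVT_gen f a b df) as [c [Hc E]].
  - intros x Hx. apply Hd. lra.
  - intros x Hx. apply continuity_pt_filterlim. apply (ex_derive_continuous (K := R_AbsRing) (V := R_NormedModule)).
    eexists. apply Hd. exact Hx.
  - exists c. split; auto.
Qed.

Lemma between_ball a b c z r : Rmin a b <= c <= Rmax a b -> Rabs (a - z) < r -> Rabs (b - z) < r -> Rabs (c - z) < r.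
Proof.
  intros Hc Ha Hb. apply Rabs_def2 in Ha. apply Rabs_def2 in Hb. apply Rabs_def1;
  unfold Rmin, Rmax in Hc; destruct (Rle_dec a b); lra.
Qed.

Section Traj.
Variable theta : R -> R.
Hypothesis Hcut : cutoff theta.
Variable T : R.
Hypothesis HT : 0 < T.
Variables X Y Z PX PY PZ : R -> R -> R.
Hypothesis Htraj : forall alpha : R,
      ham_traj theta (X alpha) (Y alpha) (Z alpha) (PX alpha) (PY alpha) (PZ alpha).
Hypothesis Hinit : forall alpha : R,
      X alpha 0 = 0 /\ Y alpha 0 = - T /\ Z alpha 0 = 0 /\
      PX alpha 0 = 0 /\ PY alpha 0 = 1 /\ PZ alpha 0 = alpha.

Definition u (i : nat) al s :=
  match i with
  | 0%nat => X al s
  | 1%nat => Y al s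
  | 2%nat => PX al s
  | 3%nat => PY al s + al * AF theta (X al s) (Y al s)
  | _ => Z al s
  end.

Definition Fs i al s := Fm theta i (u 0 al s) (u 1 al s) (u 2 al s) (u 3 al s) (u 4 al s) al.

Lemma PZ_const al s : PZ al s = al.
Proof.
  assert (H : forall s, is_derive (PZ al) s 0).
  { intros s'. destruct (Htraj al s') as (_&_&_&_&_&H). rewrite dH_z in H.
    replace 0 with (-0) by ring. exact H. }
  rewrite (const_zero_deriv _ H s). apply Hinit.
Qed.

Lemma ode i al s : is_derive (u i al) s (Fs i al s).
Proof.
  destruct (Htraj al s) as (HX & HY & HZ & HPX & HPY & HPZ).
  rewrite dH_px in HX. rewrite dH_py in HY. rewrite dH_pz in HZ. rewrite dH_x in HPX.
  rewrite dH_y in HPY by auto.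
  rewrite PZ_const in HY, HZ, HPX, HPY.
  unfold Fs, Fm, u. destruct i as [|[|[|[|i]]]].
  - exact HX.
  - replace (PY al s + al * AF theta (X al s) (Y al s)) with (PY al s + Afun theta (X al s) (Y al s) * al)
      by (unfold AF, Afun; ring). exact HY.
  - replace (- (al * (PY al s + al * AF theta (X al s) (Y al s)) * aF theta (X al s) (Y al s)))
      with (- ((PY al s + Afun theta (X al s) (Y al s) * al) * al * aF theta (X al s) (Y al s)))
      by (unfold AF, Afun; ring). exact HPX.
  - assert (HA : is_derive (fun s => AF theta (X al s) (Y al s)) s
       (aF theta (X al s) (Y al s) * PX al s +
        (X al s * th1 theta (Y al s) - (X al s)^2 * th1 theta (1 - Y al s)) *
        (PY al s + Afun theta (X al s) (Y al s) * al))).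
    { unfold AF. auto_derive.
      - repeat split; try (eexists; eassumption); try (eexists; apply th_D1; auto).
      - replace (Derive (fun x => X al x) s) with (PX al s) by (symmetry; apply is_derive_unique; exact HX).
        replace (Derive (fun x => Y al x) s) with (PY al s + Afun theta (X al s) (Y al s) * al)
          by (symmetry; apply is_derive_unique; exact HY).
        replace (1 + - Y al s) with (1 - Y al s) by ring.
        change (Derive (fun x => theta x)) with (Derive theta). unfold th1, aF. ring. }
    replace (al * PX al s * aF theta (X al s) (Y al s)) with
      ((- ((PY al s + Afun theta (X al s) (Y al s) * al) * al *
        (X al s * th1 theta (Y al s) - X al s ^ 2 * th1 theta (1 - Y al s)))) +
       al * (aF theta (X al s) (Y al s) * PX al s +
        (X al s * th1 theta (Y al s) - (X al s)^2 * th1 theta (1 - Y al s)) *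
        (PY al s + Afun theta (X al s) (Y al s) * al))) by ring.
    apply (is_derive_plus (PY al) (fun s => al * AF theta (X al s) (Y al s))); [exact HPY|].
    apply (is_derive_scal (fun s => AF theta (X al s) (Y al s))). exact HA.
  - replace ((PY al s + al * AF theta (X al s) (Y al s)) * AF theta (X al s) (Y al s))
      with ((PY al s + Afun theta (X al s) (Y al s) * al) * Afun theta (X al s) (Y al s))
      by (unfold AF, Afun; ring). exact HZ.
Qed.


Lemma u_init i al : (i < 5)%nat -> u i al 0 = match i with 0%nat => 0 | 1%nat => -T | 3%nat => 1 | _ => 0 end.
Proof.
  intros Hi. destruct (Hinit al) as (H0&H1&H2&H3&H4&H5).
  unfold u; destruct i as [|[|[|[|[|i]]]]]; try lia; auto.
  rewrite H4, H0, H1. unfold AF. ring.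
Qed.

Lemma energy al s : (u 2 al s)^2 + (u 3 al s)^2 = 1.
Proof.
  set (g := fun s => (u 2 al s)^2 + (u 3 al s)^2).
  assert (Hd : forall s, is_derive g s 0).
  { intros s'. unfold g.
    pose proof (ode 2 al s') as D2. pose proof (ode 3 al s') as D3.
    replace 0 with (2 * u 2 al s' * Fs 2 al s' + 2 * u 3 al s' * Fs 3 al s')
      by (unfold Fs, Fm; simpl; ring).
    apply sumsq_derive; auto. }
  change (g s = 1). rewrite (const_zero_deriv g Hd s). unfold g.
  rewrite !u_init by lia. ring.
Qed.

Lemma pbound al s : Rabs (u 2 al s) <= 1 /\ Rabs (u 3 al s) <= 1.
Proof.
  pose proof (energy al s). pose proof (pow2_ge_0 (u 2 al s)). pose proof (pow2_ge_0 (u 3 al s)).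
  split; apply Rabs_le; split; nra.
Qed.

Lemma xybound al s : Rabs (u 0 al s) <= Rabs s /\ Rabs (u 1 al s + T) <= Rabs s.
Proof.
  split.
  - replace (u 0 al s) with (u 0 al s - u 0 al 0) by (rewrite u_init by lia; ring).
    replace (Rabs s) with (1 * Rabs (s - 0)) by (rewrite Rminus_0_r; ring).
    apply (mvt_bound (u 0 al) (Fs 0 al)).
    + intros; apply ode.
    + intros; unfold Fs, Fm; apply pbound.
  - replace (u 1 al s + T) with (u 1 al s - u 1 al 0) by (rewrite u_init by lia; ring).
    replace (Rabs s) with (1 * Rabs (s - 0)) by (rewrite Rminus_0_r; ring).
    apply (mvt_bound (u 1 al) (Fs 1 al)).
    + intros; apply ode.
    + intros; unfold Fs, Fm; apply pbound.
Qed.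

Lemma st_box S al s : 0 <= S -> Rabs s <= S -> Rabs al <= 1 ->
  box (S + T) (u 0 al s) (u 1 al s) (u 2 al s) (u 3 al s) al.
Proof.
  intros HS Hs Hal. destruct (xybound al s) as [B0 B1]. destruct (pbound al s) as [B2 B3].
  split; [lra|]. split; [|split; [lra|split; lra]].
  replace (u 1 al s) with ((u 1 al s + T) - T) by ring.
  eapply Rle_trans; [apply Rabs_triang|]. rewrite Rabs_Ropp, (Rabs_right T) by lra. lra.
Qed.


Definition Gc L S := 1 + exp ((10*L+5)*S) / (10*L+5).

Lemma Gc_pos L S : 0 <= L -> 0 <= Gc L S.
Proof.
  intros HL. unfold Gc. assert (0 < exp ((10*L+5)*S)) by apply exp_pos.
  assert (0 < / (10*L+5)) by (apply Rinv_0_lt_compat; lra). unfold Rdiv. nra.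
Qed.

Lemma lipschitz S : 0 <= S -> exists C, 0 <= C /\
  forall al be i s, Rabs al <= 1 -> Rabs be <= 1 -> (i < 5)%nat -> 0 <= s <= S ->
  Rabs (u i be s - u i al s) <= C * Rabs (be - al).
Proof.
  intros HS. destruct (F_exp theta Hcut (S+T) ltac:(lra)) as [K [HK HF]].
  exists (K * Gc K S). split; [apply Rmult_le_pos; auto; apply Gc_pos; auto|].
  intros al be i s Hal Hbe Hi Hs.
  pose proof (Rabs_pos (be - al)).
  assert (G := gronwall5 (fun i s => u i be s - u i al s) (fun i s => Fs i be s - Fs i al s)
     K (K * Rabs (be - al)) S HK ltac:(nra) HS).
  replace (K * Gc K S * Rabs (be - al)) with (K * Rabs (be - al) * (1 + exp ((10 * K + 5) * S) / (10 * K + 5)))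
    by (unfold Gc; ring).
  apply G; auto.
  - intros j t Hj. apply (is_derive_minus (u j be) (u j al)); apply ode.
  - intros j Hj. rewrite !u_init by auto. ring.
  - intros j t Hj Ht.
    assert (Hb1 := st_box S al t HS ltac:(rewrite Rabs_right; lra) Hal).
    assert (Hb2 := st_box S be t HS ltac:(rewrite Rabs_right; lra) Hbe).
    destruct (HF _ _ _ _ (u 4 al t) _ _ _ _ _ (u 4 be t) _ Hb1 Hb2 j Hj) as (_ & _ & _ & _ & H5 & _).
    unfold Fs. eapply Rle_trans; [exact H5|]. unfold dist6, sig5. lra.
Qed.

Definition Dq h i al s := (u i (al + h) s - u i al s) / h.

Lemma dFm_scal i x y p h z al c a0 a1 a2 a3 a4 a5 :
  dFm theta i x y p h z al (c*a0) (c*a1) (c*a2) (c*a3) (c*a4) (c*a5) =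
  c * dFm theta i x y p h z al a0 a1 a2 a3 a4 a5.
Proof. destruct i as [|[|[|[|i]]]]; simpl; unfold daF, dAF; ring. Qed.

Lemma dFm_sub i x y p h z al a0 a1 a2 a3 a4 a5 b0 b1 b2 b3 b4 b5 :
  dFm theta i x y p h z al (a0-b0) (a1-b1) (a2-b2) (a3-b3) (a4-b4) (a5-b5) =
  dFm theta i x y p h z al a0 a1 a2 a3 a4 a5 - dFm theta i x y p h z al b0 b1 b2 b3 b4 b5.
Proof. destruct i as [|[|[|[|i]]]]; simpl; unfold daF, dAF; ring. Qed.

Definition dFs i al s a0 a1 a2 a3 a4 a5 :=
  dFm theta i (u 0 al s) (u 1 al s) (u 2 al s) (u 3 al s) (u 4 al s) al a0 a1 a2 a3 a4 a5.

Lemma quot_err S : 0 <= S -> exists K1, 0 <= K1 /\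
  forall al h i s, Rabs al <= 1/2 -> 0 < Rabs h <= 1/2 -> (i < 5)%nat -> 0 <= s <= S ->
  Rabs ((Fs i (al + h) s - Fs i al s) / h -
        dFs i al s (Dq h 0 al s) (Dq h 1 al s) (Dq h 2 al s) (Dq h 3 al s) (Dq h 4 al s) 1)
  <= K1 * Rabs h.
Proof.
  intros HS. destruct (F_exp theta Hcut (S+T) ltac:(lra)) as [K [HK HF]].
  destruct (lipschitz S HS) as [C [HC HL]].
  exists (K * (5*C+1)^2). split; [apply Rmult_le_pos; auto; apply pow2_ge_0|].
  intros al h i s Hal Hh Hi Hs.
  assert (Hh0 : h <> 0) by (intro E; rewrite E, Rabs_R0 in Hh; lra).
  assert (Hb1 := st_box S al s HS ltac:(rewrite Rabs_right; lra) ltac:(lra)).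
  assert (Hah : Rabs (al + h) <= 1) by (eapply Rle_trans; [apply Rabs_triang|lra]).
  assert (Hb2 := st_box S (al+h) s HS ltac:(rewrite Rabs_right; lra) Hah).
  destruct (HF _ _ _ _ (u 4 al s) _ _ _ _ _ (u 4 (al+h) s) _ Hb1 Hb2 i Hi) as (_ & Hd0 & _ & _ & _ & _ & HR).
  set (d := dist6 (u 0 al s) (u 1 al s) (u 2 al s) (u 3 al s) (u 4 al s) al
        (u 0 (al+h) s) (u 1 (al+h) s) (u 2 (al+h) s) (u 3 (al+h) s) (u 4 (al+h) s) (al+h)) in *.
  assert (Hd : d <= (5*C+1) * Rabs h).
  { unfold d, dist6. replace (al + h - al) with h by ring.
    assert (L0 := HL al (al+h) 0%nat s ltac:(lra) Hah ltac:(lia) Hs).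
    assert (L1 := HL al (al+h) 1%nat s ltac:(lra) Hah ltac:(lia) Hs).
    assert (L2 := HL al (al+h) 2%nat s ltac:(lra) Hah ltac:(lia) Hs).
    assert (L3 := HL al (al+h) 3%nat s ltac:(lra) Hah ltac:(lia) Hs).
    assert (L4 := HL al (al+h) 4%nat s ltac:(lra) Hah ltac:(lia) Hs).
    replace (al + h - al) with h in L0, L1, L2, L3, L4 by ring. simpl u in *. lra. }
  assert (Escal : dFm theta i (u 0 al s) (u 1 al s) (u 2 al s) (u 3 al s) (u 4 al s) al
         (u 0 (al + h) s - u 0 al s) (u 1 (al + h) s - u 1 al s) (u 2 (al + h) s - u 2 al s)
         (u 3 (al + h) s - u 3 al s) (u 4 (al + h) s - u 4 al s) (al + h - al) =
       h * dFs i al s (Dq h 0 al s) (Dq h 1 al s) (Dq h 2 al s) (Dq h 3 al s) (Dq h 4 al s) 1).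
  { unfold dFs. rewrite <- dFm_scal. unfold Dq. f_equal; field; auto. }
  unfold Fs in *. rewrite Escal in HR.
  replace ((Fm theta i (u 0 (al + h) s) (u 1 (al + h) s) (u 2 (al + h) s) (u 3 (al + h) s) (u 4 (al + h) s) (al + h) -
     Fm theta i (u 0 al s) (u 1 al s) (u 2 al s) (u 3 al s) (u 4 al s) al) / h -
     dFs i al s (Dq h 0 al s) (Dq h 1 al s) (Dq h 2 al s) (Dq h 3 al s) (Dq h 4 al s) 1)
   with ((Fm theta i (u 0 (al + h) s) (u 1 (al + h) s) (u 2 (al + h) s) (u 3 (al + h) s) (u 4 (al + h) s) (al + h) -
     Fm theta i (u 0 al s) (u 1 al s) (u 2 al s) (u 3 al s) (u 4 al s) al -
     h * dFs i al s (Dq h 0 al s) (Dq h 1 al s) (Dq h 2 al s) (Dq h 3 al s) (Dq h 4 al s) 1) / h)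
   by (field; auto).
  unfold Rdiv. rewrite Rabs_mult, Rabs_inv.
  assert (0 < Rabs h) by lra.
  apply (Rmult_le_reg_r (Rabs h)); auto.
  rewrite Rmult_assoc, Rinv_l by lra. rewrite Rmult_1_r.
  eapply Rle_trans; [exact HR|].
  assert (d^2 <= ((5*C+1) * Rabs h)^2) by (apply pow_incr; lra).
  replace (K * (5 * C + 1) ^ 2 * Rabs h * Rabs h) with (K * ((5*C+1) * Rabs h)^2) by ring.
  apply Rmult_le_compat_l; auto.
Qed.


Lemma cauchy S : 0 <= S -> exists C2, 0 <= C2 /\
  forall al h k i s, Rabs al <= 1/2 -> 0 < Rabs h <= 1/2 -> 0 < Rabs k <= 1/2 ->
  (i < 5)%nat -> 0 <= s <= S ->
  Rabs (Dq h i al s - Dq k i al s) <= C2 * (Rabs h + Rabs k).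
Proof.
  intros HS. destruct (quot_err S HS) as [K1 [HK1 HQ]].
  destruct (dF_lin theta Hcut (S+T) ltac:(lra)) as [K2 [HK2 HD]].
  exists (K1 * Gc K2 S). split; [apply Rmult_le_pos; auto; apply Gc_pos; auto|].
  intros al h k i s Hal Hh Hk Hi Hs.
  assert (Hh0 : h <> 0) by (intro E; rewrite E, Rabs_R0 in Hh; lra).
  assert (Hk0 : k <> 0) by (intro E; rewrite E, Rabs_R0 in Hk; lra).
  assert (G := gronwall5 (fun i s => Dq h i al s - Dq k i al s)
     (fun i s => (Fs i (al+h) s - Fs i al s) / h - (Fs i (al+k) s - Fs i al s) / k)
     K2 (K1 * (Rabs h + Rabs k)) S HK2 ltac:(apply Rmult_le_pos; auto; lra) HS).
  replace (K1 * Gc K2 S * (Rabs h + Rabs k)) with (K1 * (Rabs h + Rabs k) * (1 + exp ((10 * K2 + 5) * S) / (10 * K2 + 5)))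
    by (unfold Gc; ring).
  apply G; auto.
  - intros j t Hj. unfold Dq. apply diffq_derive; apply ode.
  - intros j Hj. unfold Dq. rewrite !u_init by auto. field. auto.
  - intros j t Hj Ht.
    assert (Eh := HQ al h j t Hal Hh Hj Ht).
    assert (Ek := HQ al k j t Hal Hk Hj Ht).
    assert (Hb := st_box S al t HS ltac:(rewrite Rabs_right; lra) ltac:(lra)).
    assert (HL := HD _ _ _ _ (u 4 al t) al (Dq h 0 al t - Dq k 0 al t) (Dq h 1 al t - Dq k 1 al t)
      (Dq h 2 al t - Dq k 2 al t) (Dq h 3 al t - Dq k 3 al t) (Dq h 4 al t - Dq k 4 al t) (1 - 1) Hb j Hj).
    rewrite dFm_sub in HL. fold (dFs j al t (Dq h 0 al t) (Dq h 1 al t) (Dq h 2 al t) (Dq h 3 al t) (Dq h 4 al t) 1) in HL.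
    fold (dFs j al t (Dq k 0 al t) (Dq k 1 al t) (Dq k 2 al t) (Dq k 3 al t) (Dq k 4 al t) 1) in HL.
    unfold nrm6 in HL. replace (1 - 1) with 0 in HL by ring. rewrite Rabs_R0, Rplus_0_r in HL.
    set (A := (Fs j (al + h) t - Fs j al t) / h) in *.
    set (B := (Fs j (al + k) t - Fs j al t) / k) in *.
    set (dA := dFs j al t (Dq h 0 al t) (Dq h 1 al t) (Dq h 2 al t) (Dq h 3 al t) (Dq h 4 al t) 1) in *.
    set (dB := dFs j al t (Dq k 0 al t) (Dq k 1 al t) (Dq k 2 al t) (Dq k 3 al t) (Dq k 4 al t) 1) in *.
    replace (A - B) with ((A - dA) - (B - dB) + (dA - dB)) by ring.
    eapply Rle_trans; [apply Rabs_triang|].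
    eapply Rle_trans; [apply Rplus_le_compat_r; apply Rabs_triang|].
    rewrite Rabs_Ropp. unfold sig5. lra.
Qed.


Definition V i al s := real (Lim_seq (fun n => Dq (/ (INR n + 2)) i al s)).

Lemma hn_facts n : 0 < / (INR n + 2) <= 1/2.
Proof.
  pose proof (pos_INR n). split.
  - apply Rinv_0_lt_compat. lra.
  - unfold Rdiv. rewrite Rmult_1_l. apply Rinv_le_contravar; lra.
Qed.

Lemma hn_small N n : (0 < N)%nat -> (N <= n)%nat -> / (INR n + 2) <= / INR N.
Proof.
  intros HN Hn. apply Rinv_le_contravar.
  - apply lt_0_INR. auto.
  - apply le_INR in Hn. lra.
Qed.

Lemma V_approx S : 0 <= S -> exists C2, 0 <= C2 /\
  forall al h i s, Rabs al <= 1/2 -> 0 < Rabs h <= 1/2 -> (i < 5)%nat -> 0 <= s <= S ->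
  Rabs (Dq h i al s - V i al s) <= C2 * Rabs h.
Proof.
  intros HS. destruct (cauchy S HS) as [C2 [HC2 HC]].
  exists C2. split; auto. intros al h i s Hal Hh Hi Hs.
  set (v := fun n => Dq (/ (INR n + 2)) i al s).
  assert (Hv : forall n, 0 < Rabs (/ (INR n + 2)) <= 1/2).
  { intros n. destruct (hn_facts n). rewrite Rabs_right; lra. }
  assert (Hcau : ex_lim_seq_cauchy v).
  { intros eps. destruct (archimed_cor1 (eps / (2 * C2 + 1))) as [N [HN1 HN2]].
    { apply Rdiv_lt_0_compat; [apply cond_pos|lra]. }
    exists N. intros n m Hn Hm. unfold v.
    eapply Rle_lt_trans. apply HC; auto.
    destruct (hn_facts n). destruct (hn_facts m).
    rewrite (Rabs_right (/ (INR n + 2))), (Rabs_right (/ (INR m + 2))) by lra.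
    pose proof (hn_small N n HN2 Hn). pose proof (hn_small N m HN2 Hm).
    assert (C2 * (/ (INR n + 2) + / (INR m + 2)) <= 2 * C2 * / INR N) by nra.
    assert (2 * C2 * / INR N < eps).
    { assert (Hpos := cond_pos eps).
      assert (0 < / INR N) by (apply Rinv_0_lt_compat, lt_0_INR; auto).
      apply (Rmult_lt_compat_l (2 * C2 + 1)) in HN1; [|lra].
      replace ((2 * C2 + 1) * (eps / (2 * C2 + 1))) with (pos eps) in HN1 by (field; lra).
      nra. }
    lra. }
  apply ex_lim_seq_cauchy_corr in Hcau. destruct Hcau as [l Hl].
  assert (HV : V i al s = l) by (unfold V; fold v; rewrite (is_lim_seq_unique _ _ Hl); reflexivity).
  rewrite HV. apply is_lim_seq_Reals in Hl.
  apply Rle_plus_epsilon. intros eps Heps.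
  destruct (Hl (eps/2) ltac:(lra)) as [N1 HN1].
  destruct (archimed_cor1 (eps / (2 * C2 + 1))) as [N2 [HN2a HN2b]].
  { apply Rdiv_lt_0_compat; lra. }
  set (n := (N1 + N2)%nat).
  specialize (HN1 n ltac:(unfold n; lia)). unfold R_dist in HN1.
  assert (Hc := HC al h (/ (INR n + 2)) i s Hal Hh (Hv n) Hi Hs). fold v in Hc.
  destruct (hn_facts n). rewrite (Rabs_right (/ (INR n + 2))) in Hc by lra.
  pose proof (hn_small N2 n HN2b ltac:(unfold n; lia)).
  assert (C2 * / (INR n + 2) <= eps / 2).
  { apply (Rmult_lt_compat_l (2 * C2 + 1)) in HN2a; [|lra].
    replace ((2 * C2 + 1) * (eps / (2 * C2 + 1))) with eps in HN2a by (field; lra).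
    assert (0 < / INR N2) by (apply Rinv_0_lt_compat, lt_0_INR; auto). nra. }
  replace (Dq h i al s - l) with ((Dq h i al s - v n) + (v n - l)) by ring.
  eapply Rle_trans; [apply Rabs_triang|]. unfold v in *. lra.
Qed.

Lemma Dq_bound S : 0 <= S -> exists C, 0 <= C /\
  forall al h i s, Rabs al <= 1/2 -> 0 < Rabs h <= 1/2 -> (i < 5)%nat -> 0 <= s <= S ->
  Rabs (Dq h i al s) <= C.
Proof.
  intros HS. destruct (lipschitz S HS) as [C [HC HL]]. exists C. split; auto.
  intros al h i s Hal Hh Hi Hs. unfold Dq.
  assert (Hh0 : h <> 0) by (intro E; rewrite E, Rabs_R0 in Hh; lra).
  unfold Rdiv. rewrite Rabs_mult, Rabs_inv.
  apply (Rmult_le_reg_r (Rabs h)); [lra|].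
  rewrite Rmult_assoc, Rinv_l by lra. rewrite Rmult_1_r.
  replace h with (al + h - al) at 2 by ring.
  apply HL; auto; try lra. eapply Rle_trans; [apply Rabs_triang|lra].
Qed.

Lemma V_deriv S : 0 <= S -> forall al i s, Rabs al <= 1/2 -> (i < 5)%nat -> 0 <= s <= S ->
  is_derive (fun a => u i a s) al (V i al s).
Proof.
  intros HS. destruct (V_approx S HS) as [C2 [HC2 HV]].
  intros al i s Hal Hi Hs. apply is_derive_Reals.
  intros eps Heps.
  exists (mkposreal (Rmin (1/2) (eps / (C2 + 1))) ltac:(apply Rmin_pos; [lra| apply Rdiv_lt_0_compat; lra])).
  intros h Hh0 Hh. simpl in Hh.
  assert (Hh' : 0 < Rabs h <= 1/2).
  { split; [apply Rabs_pos_lt; auto|]. pose proof (Rmin_l (1/2) (eps / (C2 + 1))). lra. }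
  specialize (HV al h i s Hal Hh' Hi Hs). unfold Dq in HV.
  eapply Rle_lt_trans; [exact HV|].
  pose proof (Rmin_r (1/2) (eps / (C2 + 1))).
  assert (Rabs h < eps / (C2 + 1)) by lra.
  apply (Rmult_lt_compat_l (C2 + 1)) in H0; [|lra].
  replace ((C2 + 1) * (eps / (C2 + 1))) with eps in H0 by (field; lra).
  assert (0 <= Rabs h) by apply Rabs_pos. nra.
Qed.


Lemma sol0 s : u 0 0 s = 0 /\ u 1 0 s = s - T /\ u 2 0 s = 0 /\ u 3 0 s = 1 /\ u 4 0 s = 0.
Proof.
  assert (H2 : forall s, u 2 0 s = 0).
  { intros s'. rewrite (const_zero_deriv (u 2 0)); [rewrite u_init by lia; reflexivity|].
    intros x. replace 0 with (Fs 2 0 x) at 2 by (unfold Fs, Fm; simpl; ring). apply ode. }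
  assert (H3 : forall s, u 3 0 s = 1).
  { intros s'. rewrite (const_zero_deriv (u 3 0)); [rewrite u_init by lia; reflexivity|].
    intros x. replace 0 with (Fs 3 0 x) at 2 by (unfold Fs, Fm; simpl; ring). apply ode. }
  assert (H0 : forall s, u 0 0 s = 0).
  { intros s'. rewrite (const_zero_deriv (u 0 0)); [rewrite u_init by lia; reflexivity|].
    intros x. replace 0 with (Fs 0 0 x) at 2 by (unfold Fs, Fm; simpl; apply H2). apply ode. }
  assert (H1 : forall s, u 1 0 s = s - T).
  { intros s'. assert (Hg : forall x, is_derive (fun x => u 1 0 x - x) x 0).
    { intros x. apply (is_derive_eq _ _ (Fs 1 0 x - 1)).
      - apply (is_derive_minus (u 1 0) (fun x => x)); [apply ode| apply (is_derive_id (K:=R_AbsRing))].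
      - unfold Fs; cbn [Fm]; rewrite H3; ring. }
    pose proof (const_zero_deriv _ Hg s'). cbv beta in H. rewrite u_init in H by lia. lra. }
  assert (H4 : forall s, u 4 0 s = 0).
  { intros s'. rewrite (const_zero_deriv (u 4 0)); [rewrite u_init by lia; reflexivity|].
    intros x. replace 0 with (Fs 4 0 x) at 2.
    - apply ode.
    - unfold Fs, Fm. simpl. pose proof (H0 x) as E. simpl in E. rewrite E. unfold AF. ring. }
  auto.
Qed.

Lemma Fs_bound S : 0 <= S -> exists B, 0 <= B /\ forall al i s, Rabs al <= 1 -> (i < 5)%nat -> Rabs s <= S ->
  Rabs (Fs i al s) <= B.
Proof.
  intros HS. destruct (F_exp theta Hcut (S+T) ltac:(lra)) as [K [HK HF]].
  exists K. split; auto. intros al i s Hal Hi Hs.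
  assert (Hb := st_box S al s HS Hs Hal).
  destruct (HF _ _ _ _ (u 4 al s) _ _ _ _ _ (u 4 al s) _ Hb Hb i Hi) as (_ & _ & H & _). exact H.
Qed.

Lemma joint_lip S : 0 <= S -> exists C, 0 <= C /\
  forall al be i s s', Rabs al <= 1 -> Rabs be <= 1 -> (i < 5)%nat -> 0 <= s <= S -> 0 <= s' <= S ->
  Rabs (u i be s' - u i al s) <= C * (Rabs (s' - s) + Rabs (be - al)).
Proof.
  intros HS. destruct (lipschitz S HS) as [C [HC HL]]. destruct (Fs_bound S HS) as [B [HB HBb]].
  exists (C + B). split; [lra|]. intros al be i s s' Hal Hbe Hi Hs Hs'.
  replace (u i be s' - u i al s) with ((u i be s' - u i be s) + (u i be s - u i al s)) by ring.
  eapply Rle_trans; [apply Rabs_triang|].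
  assert (E1 : Rabs (u i be s' - u i be s) <= B * Rabs (s' - s)).
  { apply (mvt_bound (u i be) (Fs i be)).
    - intros; apply ode.
    - intros c Hc. apply HBb; auto. apply Rabs_le. unfold Rmin, Rmax in Hc. destruct (Rle_dec s s'); lra. }
  assert (E2 := HL al be i s Hal Hbe Hi Hs).
  pose proof (Rabs_pos (s'-s)). pose proof (Rabs_pos (be - al)). nra.
Qed.

Lemma Fs_cont S : 0 <= S -> exists C, 0 <= C /\
  forall al be i s s', Rabs al <= 1 -> Rabs be <= 1 -> (i < 5)%nat -> 0 <= s <= S -> 0 <= s' <= S ->
  Rabs (Fs i be s' - Fs i al s) <= C * (Rabs (s' - s) + Rabs (be - al)).
Proof.
  intros HS. destruct (joint_lip S HS) as [C [HC HJ]].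
  destruct (F_exp theta Hcut (S+T) ltac:(lra)) as [K [HK HF]].
  exists (K * (5 * C + 1)). split; [nra|]. intros al be i s s' Hal Hbe Hi Hs Hs'.
  assert (Hb1 := st_box S al s HS ltac:(rewrite Rabs_right; lra) Hal).
  assert (Hb2 := st_box S be s' HS ltac:(rewrite Rabs_right; lra) Hbe).
  destruct (HF _ _ _ _ (u 4 al s) _ _ _ _ _ (u 4 be s') _ Hb1 Hb2 i Hi) as (_ & _ & _ & _ & H & _).
  unfold Fs. eapply Rle_trans; [exact H|]. rewrite Rmult_assoc. apply Rmult_le_compat_l; auto. unfold dist6.
  assert (J0 := HJ al be 0%nat s s' Hal Hbe ltac:(lia) Hs Hs').
  assert (J1 := HJ al be 1%nat s s' Hal Hbe ltac:(lia) Hs Hs').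
  assert (J2 := HJ al be 2%nat s s' Hal Hbe ltac:(lia) Hs Hs').
  assert (J3 := HJ al be 3%nat s s' Hal Hbe ltac:(lia) Hs Hs').
  assert (J4 := HJ al be 4%nat s s' Hal Hbe ltac:(lia) Hs Hs').
  pose proof (Rabs_pos (s'-s)). pose proof (Rabs_pos (be - al)). nra.
Qed.

Lemma V_cont0 S s0 : 0 <= S -> 0 <= s0 <= S -> forall i, (i < 5)%nat -> forall eps, 0 < eps ->
  exists delta, 0 < delta /\ forall al s, Rabs al < delta -> Rabs (s - s0) < delta -> 0 <= s <= S ->
  Rabs (V i al s - V i 0 s0) <= eps.
Proof.
  intros HS Hs0 i Hi eps Heps.
  destruct (V_approx S HS) as [C2 [HC2 HV]]. destruct (joint_lip S HS) as [C [HC HJ]].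
  set (h := Rmin (1/2) (eps / (4 * C2 + 1))).
  assert (Hh : 0 < h) by (apply Rmin_pos; [lra| apply Rdiv_lt_0_compat; lra]).
  assert (Hh1 : h <= 1/2) by apply Rmin_l.
  assert (Hh2 : C2 * h <= eps / 4).
  { assert (h <= eps / (4 * C2 + 1)) by apply Rmin_r.
    apply (Rmult_le_compat_l (4*C2+1)) in H; [|lra].
    replace ((4 * C2 + 1) * (eps / (4 * C2 + 1))) with eps in H by (field; lra). nra. }
  exists (Rmin (1/2) (eps * h / (8 * C + 1))). split.
  { apply Rmin_pos; [lra|]. apply Rdiv_lt_0_compat; [nra|lra]. }
  intros al s Hal Hs Hs'.
  pose proof (Rmin_l (1/2) (eps * h / (8 * C + 1))). pose proof (Rmin_r (1/2) (eps * h / (8 * C + 1))).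
  assert (Hha : 0 < Rabs h <= 1/2) by (rewrite Rabs_right; lra).
  assert (A1 := HV al h i s ltac:(lra) Hha Hi Hs').
  assert (A2 := HV 0 h i s0 ltac:(rewrite Rabs_R0; lra) Hha Hi Hs0).
  assert (Hd : Rabs (Dq h i al s - Dq h i 0 s0) <= eps / 2).
  { unfold Dq. replace ((u i (al + h) s - u i al s) / h - (u i (0 + h) s0 - u i 0 s0) / h)
      with (((u i (al + h) s - u i (0 + h) s0) - (u i al s - u i 0 s0)) / h) by (field; lra).
    unfold Rdiv. rewrite Rabs_mult, Rabs_inv, (Rabs_right h) by lra.
    apply (Rmult_le_reg_r h); [lra|]. rewrite Rmult_assoc, Rinv_l, Rmult_1_r by lra.
    eapply Rle_trans; [apply Rabs_triang|]. rewrite Rabs_Ropp.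
    assert (B1 := HJ (0+h) (al+h) i s0 s ltac:(rewrite Rplus_0_l, Rabs_right; lra)
       ltac:(eapply Rle_trans; [apply Rabs_triang| rewrite (Rabs_right h); lra]) Hi Hs0 Hs').
    assert (B2 := HJ 0 al i s0 s ltac:(rewrite Rabs_R0; lra) ltac:(lra) Hi Hs0 Hs').
    replace (al + h - (0 + h)) with (al - 0) in B1 by ring.
    rewrite Rminus_0_r in B1, B2.
    assert (C * (Rabs (s - s0) + Rabs al) <= C * (2 * (eps * h / (8 * C + 1)))) by (apply Rmult_le_compat_l; lra).
    assert (C * (2 * (eps * h / (8 * C + 1))) <= eps / 2 * h / 2).
    { unfold Rdiv. replace (C * (2 * (eps * h * / (8 * C + 1)))) with ((2 * C) * / (8*C+1) * (eps * h)) by ring.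
      replace (eps * / 2 * h * / 2) with (/4 * (eps * h)) by field.
      apply Rmult_le_compat_r; [nra|].
      apply (Rmult_le_reg_r (8*C+1)); [lra|]. rewrite Rmult_assoc, Rinv_l by lra. lra. }
    lra. }
  replace (V i al s - V i 0 s0) with ((V i al s - Dq h i al s) + (Dq h i al s - Dq h i 0 s0) + (Dq h i 0 s0 - V i 0 s0)) by ring.
  eapply Rle_trans; [apply Rabs_triang|]. eapply Rle_trans; [apply Rplus_le_compat_r; apply Rabs_triang|].
  rewrite <- (Rabs_Ropp (V i al s - Dq h i al s)). replace (- (V i al s - Dq h i al s)) with (Dq h i al s - V i al s) by ring.
  rewrite (Rabs_right h) in A1, A2 by lra. lra.
Qed.


Lemma Vx_neg t : 0 < t -> exists c, 0 < c /\ V 0 0 (t + T) <= - c.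
Proof.
  intros Ht. set (S := t + T + 1). assert (HS : 0 <= S) by (unfold S; lra).
  set (s0 := t + T). set (a := T + t / 2).
  destruct (lipschitz S HS) as [C [HC HL]].
  destruct (V_approx S HS) as [C2 [HC2 HV]].
  destruct (th_bounds theta Hcut (S + T) ltac:(lra)) as [M1 [HM1 HB]].
  pose proof Hcut as (_ & _ & Hmono & _ & Hpos & _).
  set (m := theta (t / 2)). assert (Hm : 0 < m) by (apply Hpos; lra).
  set (K := C * (3 + M1)). assert (HK : 0 <= K) by (unfold K; nra).
  set (b := m * t^2 / 16). assert (Ht2 : 0 < t^2) by (apply pow_lt; lra).
  assert (Hb : 0 < b) by (unfold b; apply Rdiv_lt_0_compat; [apply Rmult_lt_0_compat; lra| lra]).
  set (h := Rmin (1/2) (Rmin (1 / 2 / (C + 1)) (Rmin (b / (K * (S^2 + S * t) + 1)) (b / 2 / (C2 + 1))))).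
  assert (Hh0 : 0 < h).
  { unfold h. repeat apply Rmin_pos; try lra; apply Rdiv_lt_0_compat; try lra.
    assert (0 <= K * (S^2 + S*t)) by (apply Rmult_le_pos; nra). lra. }
  assert (Hh1 : h <= 1/2) by apply Rmin_l.
  assert (HCh : C * h <= 1/2).
  { assert (Hq : h <= 1 / 2 / (C+1)) by (eapply Rle_trans; [apply Rmin_r| apply Rmin_l]).
    eapply Rle_trans; [apply Rmult_le_compat_l; [exact HC| exact Hq]|]. apply small_lin; lra. }
  assert (HKh : K * h * (S^2 + S * t) <= b).
  { assert (Hq : h <= b / (K * (S^2 + S*t) + 1)) by (eapply Rle_trans; [apply Rmin_r|]; eapply Rle_trans; [apply Rmin_r| apply Rmin_l]).
    assert (0 <= K * (S^2 + S*t)) by (apply Rmult_le_pos; nra).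
    replace (K * h * (S^2 + S*t)) with ((K * (S^2 + S*t)) * h) by ring.
    eapply Rle_trans; [apply Rmult_le_compat_l; [auto| exact Hq]|]. apply small_lin; lra. }
  assert (HC2h : C2 * h <= b / 2).
  { assert (Hq : h <= b / 2 / (C2 + 1)) by (eapply Rle_trans; [apply Rmin_r|]; eapply Rle_trans; [apply Rmin_r| apply Rmin_r]).
    eapply Rle_trans; [apply Rmult_le_compat_l; [exact HC2| exact Hq]|]. apply small_lin; lra. }
  assert (Close : forall j s, (j < 5)%nat -> 0 <= s <= S -> Rabs (u j h s - u j 0 s) <= C * h).
  { intros j s Hj Hs. replace (C * h) with (C * Rabs (h - 0)) by (rewrite Rminus_0_r, Rabs_right; lra).
    apply HL; auto; rewrite ?Rabs_R0, ?Rabs_right; lra. }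
  assert (Low : forall s, 0 <= s <= S -> theta (s - T) - K * h <= u 3 h s * aF theta (u 0 h s) (u 1 h s)).
  { intros s Hs. destruct (sol0 s) as (E0 & E1 & E2 & E3 & E4).
    assert (C0 := Close 0%nat s ltac:(lia) Hs). assert (C1 := Close 1%nat s ltac:(lia) Hs).
    assert (C3 := Close 3%nat s ltac:(lia) Hs).
    rewrite E0, Rminus_0_r in C0. rewrite E1 in C1. rewrite E3 in C3.
    destruct (pbound h s) as [_ P3].
    assert (Hbx := st_box S h s HS ltac:(rewrite Rabs_right; lra) ltac:(rewrite Rabs_right; lra)).
    destruct Hbx as (_ & Hy & _).
    assert (Hth : Rabs (theta (u 1 h s) - theta (s - T)) <= M1 * Rabs (u 1 h s - (s - T))).
    { apply (mvt_bound theta (th1 theta)).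
      - intros; apply (th_D1 theta Hcut).
      - intros c Hc. apply HB. apply (seg_in (S+T) (s - T) (u 1 h s)); auto.
        apply Rabs_le. unfold S in *; lra. }
    assert (M1C : M1 * Rabs (u 1 h s - (s - T)) <= M1 * (C * h)) by (apply Rmult_le_compat_l; auto).
    unfold aF, K.
    pose proof (th01 theta Hcut (u 1 h s)) as T1. pose proof (th01 theta Hcut (1 - u 1 h s)) as T2.
    set (w := u 3 h s) in *. set (x := u 0 h s) in *.
    set (th := theta (u 1 h s)) in *. set (th' := theta (1 - u 1 h s)) in *.
    apply Rabs_le_between in C0. apply Rabs_le_between in C3. apply Rabs_le_between in P3.
    apply Rabs_le_between in Hth.
    assert (A1 : w * th >= th - C * h) by nra.
    assert (A2 : w * (2 * x * th') >= - 2 * (C * h)).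
    { assert (Rabs (w * (2 * x * th')) <= 2 * (C * h)).
      { rewrite !Rabs_mult. rewrite (Rabs_right 2) by lra. rewrite (Rabs_right th') by lra.
        assert (Rabs w <= 1) by (apply Rabs_le; lra). assert (Rabs x <= C * h) by (apply Rabs_le; lra).
        assert (0 <= Rabs w) by apply Rabs_pos. assert (0 <= Rabs x) by apply Rabs_pos.
        assert (Q1 : 0 <= 2 * Rabs x * th') by (apply Rmult_le_pos; lra).
        assert (Q2 : Rabs x * th' <= Rabs x) by nra.
        assert (Q3 : Rabs w * (2 * Rabs x * th') <= 2 * Rabs x * th') by nra.
        lra. }
      apply Rabs_le_between in H. lra. }
    replace (w * (th + 2 * x * th')) with (w * th + w * (2 * x * th')) by ring.
    assert (M1 * (C * h) = C * M1 * h) by ring. nra. }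
  set (q := fun s => u 2 h s / h). set (r := fun s => u 0 h s / h).
  set (dq := fun s => - (u 3 h s * aF theta (u 0 h s) (u 1 h s))).
  assert (Dq_ : forall s, is_derive q s (dq s)).
  { intros s. apply (is_derive_eq _ _ (Fs 2 h s / h)).
    - apply is_derive_divc. apply ode.
    - unfold Fs, dq; cbn [Fm]. field. lra. }
  assert (Dr_ : forall s, is_derive r s (q s)).
  { intros s. apply (is_derive_eq _ _ (Fs 0 h s / h)).
    - apply is_derive_divc. apply ode.
    - unfold Fs, q; cbn [Fm]. reflexivity. }
  assert (q0 : q 0 = 0) by (unfold q; rewrite u_init by lia; field; lra).
  assert (r0 : r 0 = 0) by (unfold r; rewrite u_init by lia; field; lra).
  assert (Ha : 0 <= a <= s0) by (unfold a, s0; lra).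
  assert (Hs0S : s0 <= S) by (unfold s0, S; lra).
  assert (KhS : 0 <= K * h * S) by (apply Rmult_le_pos; [apply Rmult_le_pos|]; lra).
  assert (SA : forall s, 0 <= s <= s0 -> q s <= K * h * s).
  { intros s Hs. assert (E := cmp_deriv q dq (fun s => K * h * s) (fun _ => K * h) 0 s ltac:(lra)
      ltac:(intros; apply Dq_)
      ltac:(intros; auto_derive; auto; ring)).
    assert (Hle : forall s', 0 <= s' <= s -> dq s' <= K * h).
    { intros s' Hs'. unfold dq. pose proof (Low s' ltac:(lra)). pose proof (th01 theta Hcut (s' - T)). lra. }
    specialize (E Hle). rewrite q0 in E. lra. }
  assert (SB : forall s, a <= s <= s0 -> q s <= q a - (m - K * h) * (s - a)).
  { intros s Hs. assert (E := cmp_deriv q dq (fun s => - (m - K * h) * (s - a)) (fun _ => - (m - K * h)) a s ltac:(lra)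
      ltac:(intros; apply Dq_)
      ltac:(intros; auto_derive; auto; ring)).
    assert (Hle : forall s', a <= s' <= s -> dq s' <= - (m - K * h)).
    { intros s' Hs'. unfold dq. pose proof (Low s' ltac:(unfold a, s0 in *; lra)).
      assert (m <= theta (s' - T)) by (apply Hmono; unfold a in Hs'; lra). lra. }
    specialize (E Hle). lra. }
  assert (SC : r a <= K * h * S * a).
  { assert (E := cmp_deriv r q (fun s => K * h * S * s) (fun _ => K * h * S) 0 a ltac:(lra)
      ltac:(intros; apply Dr_)
      ltac:(intros; auto_derive; auto; ring)).
    assert (Hle : forall s', 0 <= s' <= a -> q s' <= K * h * S).
    { intros s' Hs'. pose proof (SA s' ltac:(lra)). assert (K * h * s' <= K * h * S).
      { apply Rmult_le_compat_l; [apply Rmult_le_pos|]; lra. } lra. }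
    specialize (E Hle). rewrite r0 in E. lra. }
  assert (SD : r s0 - (2 * K * h * S * (s0 - a) - m * (s0 - a)^2 / 2) <= r a - 0).
  { assert (E := cmp_deriv r q (fun s => 2 * K * h * S * (s - a) - m * (s - a)^2 / 2)
      (fun s => 2 * K * h * S - m * (s - a)) a s0 ltac:(lra)
      ltac:(intros; apply Dr_)
      ltac:(intros; auto_derive; auto; field)).
    assert (Hle : forall s', a <= s' <= s0 -> q s' <= 2 * K * h * S - m * (s' - a)).
    { intros s' Hs'. pose proof (SB s' Hs'). pose proof (SA a Ha).
      assert (K * h * a <= K * h * S) by (apply Rmult_le_compat_l; [apply Rmult_le_pos|]; lra).
      assert (K * h * (s' - a) <= K * h * S) by (apply Rmult_le_compat_l; [apply Rmult_le_pos|]; unfold a, s0, S in *; lra).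
      lra. }
    specialize (E Hle). replace (a - a) with 0 in E by ring. lra. }
  assert (Hs0a : s0 - a = t / 2) by (unfold s0, a; field).
  rewrite Hs0a in SD.
  assert (Rneg : r s0 <= - b).
  { assert (K * h * S * a <= K * h * S * S) by (apply Rmult_le_compat_l; [|unfold a, S]; lra).
    assert (K * h * (S^2 + S * t) = K * h * S * S + 2 * K * h * S * (t/2)) by field.
    assert (m * (t/2)^2/2 = 2 * b) by (unfold b; field).
    lra. }
  exists (b / 2). split; [lra|].
  assert (HV0 := HV 0 h 0%nat s0 ltac:(rewrite Rabs_R0; lra) ltac:(rewrite Rabs_right; lra) ltac:(lia) ltac:(lra)).
  rewrite (Rabs_right h) in HV0 by lra.
  assert (EDq : Dq h 0 0 s0 = r s0).
  { unfold Dq, r. rewrite Rplus_0_l. destruct (sol0 s0) as (E0 & _). rewrite E0. field. lra. }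
  rewrite EDq in HV0. apply Rabs_le_between in HV0. fold s0. lra.
Qed.


Lemma V_bound S : 0 <= S -> exists Cv, 0 <= Cv /\
  forall al i s, Rabs al <= 1/2 -> (i < 5)%nat -> 0 <= s <= S -> Rabs (V i al s) <= Cv.
Proof.
  intros HS. destruct (Dq_bound S HS) as [C [HC HD]]. destruct (V_approx S HS) as [C2 [HC2 HV]].
  exists (C + C2). split; [lra|]. intros al i s Hal Hi Hs.
  assert (Hh : 0 < Rabs (1/2) <= 1/2) by (rewrite Rabs_right; lra).
  assert (A := HV al (1/2) i s Hal Hh Hi Hs). assert (B := HD al (1/2) i s Hal Hh Hi Hs).
  rewrite (Rabs_right (1/2)) in A by lra.
  replace (V i al s) with (Dq (1/2) i al s - (Dq (1/2) i al s - V i al s)) by ring.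
  eapply Rle_trans; [apply Rabs_triang|]. rewrite Rabs_Ropp. lra.
Qed.


Lemma main_sec t : 0 < t ->
  let Phi := fun q : R * R =>
    (X (snd q) (fst q + T), Y (snd q) (fst q + T), Z (snd q) (fst q + T)) in
  exists U : R * R -> Prop, open U /\ U (t, 0) /\ embedding_on U Phi.
Proof.
  intros Ht Phi.
  set (S := t + T + 1). assert (HS : 0 <= S) by (unfold S; lra).
  set (s0 := t + T). assert (Hs0 : 0 <= s0 <= S) by (unfold s0, S; lra).
  destruct (Vx_neg t Ht) as [c0 [Hc0 Hv0]]. fold s0 in Hv0.
  destruct (V_bound S HS) as [Cv [HCv HVb]].
  destruct (lipschitz S HS) as [C [HC HL]].
  destruct (Fs_cont S HS) as [CF [HCF HFc]].
  set (eps := Rmin (1/2) (c0 / 2 / (1 + 2 * Cv))).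
  assert (Heps0 : 0 < eps) by (apply Rmin_pos; [lra| apply Rdiv_lt_0_compat; lra]).
  assert (Heps1 : eps <= 1/2) by apply Rmin_l.
  assert (Heps2 : eps * (1 + 2 * Cv) <= c0 / 2).
  { assert (eps <= c0 / 2 / (1 + 2 * Cv)) by apply Rmin_r.
    apply (Rmult_le_compat_r (1 + 2 * Cv)) in H; [|lra].
    replace (c0 / 2 / (1 + 2 * Cv) * (1 + 2 * Cv)) with (c0 / 2) in H by (field; lra). exact H. }
  destruct (V_cont0 S s0 HS Hs0 0%nat ltac:(lia) eps Heps0) as [dl [Hdl HVc]].
  set (r := Rmin (Rmin (1/4) (t/2)) (Rmin dl (eps / (C + 1)))).
  assert (Hr0 : 0 < r).
  { unfold r. repeat apply Rmin_pos; try lra; auto. apply Rdiv_lt_0_compat; lra. }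
  assert (Hr1 : r <= 1/4) by (unfold r; eapply Rle_trans; [apply Rmin_l| apply Rmin_l]).
  assert (Hr2 : r <= t/2) by (unfold r; eapply Rle_trans; [apply Rmin_l| apply Rmin_r]).
  assert (Hr3 : r <= dl) by (unfold r; eapply Rle_trans; [apply Rmin_r| apply Rmin_l]).
  assert (Hr4 : C * r <= eps).
  { assert (r <= eps / (C + 1)) by (unfold r; eapply Rle_trans; [apply Rmin_r| apply Rmin_r]).
    eapply Rle_trans; [apply Rmult_le_compat_l; [exact HC| exact H]|]. apply small_lin; lra. }
  set (Reg := fun al s => Rabs al < r /\ Rabs (s - s0) < r).
  assert (RS : forall al s, Reg al s -> 0 <= s <= S /\ Rabs al <= 1/2 /\ Rabs al <= 1).
  { intros al s [H1 H2]. apply Rabs_def2 in H2. unfold s0, S in *. lra. }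
  assert (RE1 : forall al s, Reg al s -> Rabs (u 2 al s) <= eps).
  { intros al s Hr. destruct (RS al s Hr) as (Hs & Ha & Ha1). destruct Hr as [Hr _].
    assert (E := HL 0 al 2%nat s ltac:(rewrite Rabs_R0; lra) Ha1 ltac:(lia) Hs).
    destruct (sol0 s) as (_ & _ & E2 & _). rewrite E2, !Rminus_0_r in E.
    assert (C * Rabs al <= C * r) by (apply Rmult_le_compat_l; lra). lra. }
  assert (RE3 : forall al s, Reg al s -> Rabs (u 3 al s - 1) <= eps).
  { intros al s Hr. destruct (RS al s Hr) as (Hs & Ha & Ha1). destruct Hr as [Hr _].
    assert (E := HL 0 al 3%nat s ltac:(rewrite Rabs_R0; lra) Ha1 ltac:(lia) Hs).
    destruct (sol0 s) as (_ & _ & _ & E3 & _). rewrite E3, Rminus_0_r in E.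
    assert (C * Rabs al <= C * r) by (apply Rmult_le_compat_l; lra). lra. }
  assert (RE2 : forall al s, Reg al s -> Rabs (V 0 al s - V 0 0 s0) <= eps).
  { intros al s Hr. destruct (RS al s Hr) as (Hs & Ha & Ha1). destruct Hr as [Hr Hr'].
    apply HVc; auto; lra. }
  assert (REw : forall al s, Reg al s -> Rabs (V 1 al s) <= Cv).
  { intros al s Hr. destruct (RS al s Hr) as (Hs & Ha & Ha1). apply HVb; auto. }
  set (Kinv := 2 + 4 / c0 + 8 * Cv / c0).
  assert (HKinv : 0 < Kinv).
  { unfold Kinv. assert (0 < 4 / c0) by (apply Rdiv_lt_0_compat; lra).
    assert (0 <= 8 * Cv / c0) by (apply Rmult_le_pos; [lra| left; apply Rinv_0_lt_compat; lra]). lra. }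
  set (U := fun q : R * R => Rabs (fst q - t) < r /\ Rabs (snd q) < r).
  assert (UReg : forall q, U q -> Reg (snd q) (fst q + T)).
  { intros [x y] [H1 H2]. split; auto. simpl. unfold s0. replace (x + T - (t + T)) with (x - t) by ring. auto. }
  assert (LB : forall p q, U p -> U q ->
    Rabs (fst p - fst q) <= Kinv * Rmax (Rabs (u 0 (snd p) (fst p + T) - u 0 (snd q) (fst q + T)))
                                        (Rabs (u 1 (snd p) (fst p + T) - u 1 (snd q) (fst q + T))) /\
    Rabs (snd p - snd q) <= Kinv * Rmax (Rabs (u 0 (snd p) (fst p + T) - u 0 (snd q) (fst q + T)))
                                        (Rabs (u 1 (snd p) (fst p + T) - u 1 (snd q) (fst q + T)))).
  { intros [x1 y1] [x2 y2] Hp Hq. simpl.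
    assert (R1 := UReg _ Hp). assert (R2 := UReg _ Hq). simpl in R1, R2.
    set (s1 := x1 + T) in *. set (s2 := x2 + T) in *.
    destruct (RS _ _ R2) as (Hs2 & Ha2 & _).
    destruct (mvt_eq (u 0 y1) (Fs 0 y1) s2 s1 (fun x _ => ode 0 y1 x)) as [xi [Hxi Ex1]].
    destruct (mvt_eq (u 1 y1) (Fs 1 y1) s2 s1 (fun x _ => ode 1 y1 x)) as [xi' [Hxi' Ey1]].
    assert (Hab : forall a, Rmin y2 y1 <= a <= Rmax y2 y1 -> Rabs a < r).
    { intros a Ha. rewrite <- (Rminus_0_r a). apply (between_ball y2 y1 a 0 r Ha);
      rewrite Rminus_0_r; [apply R2|apply R1]. }
    destruct (mvt_eq (fun a => u 0 a s2) (fun a => V 0 a s2) y2 y1) as [eta [Heta Ex2]].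
    { intros a Ha. apply (V_deriv S HS); auto; try lia. specialize (Hab a Ha). lra. }
    destruct (mvt_eq (fun a => u 1 a s2) (fun a => V 1 a s2) y2 y1) as [eta' [Heta' Ey2]].
    { intros a Ha. apply (V_deriv S HS); auto; try lia. specialize (Hab a Ha). lra. }
    cbv beta in Ex2, Ey2.
    assert (Rxi : Reg y1 xi) by (split; [apply R1| apply (between_ball s2 s1 xi s0 r Hxi); [apply R2| apply R1]]).
    assert (Rxi' : Reg y1 xi') by (split; [apply R1| apply (between_ball s2 s1 xi' s0 r Hxi'); [apply R2| apply R1]]).
    assert (Reta : Reg eta s2) by (split; [apply Hab; auto| apply R2]).
    assert (Reta' : Reg eta' s2) by (split; [apply Hab; auto| apply R2]).
    set (m := Rmax (Rabs (u 0 y1 s1 - u 0 y2 s2)) (Rabs (u 1 y1 s1 - u 1 y2 s2))).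
    assert (F0 : Fs 0 y1 xi = u 2 y1 xi) by (unfold Fs; cbn [Fm]; reflexivity).
    assert (F1 : Fs 1 y1 xi' = u 3 y1 xi') by (unfold Fs; cbn [Fm]; reflexivity).
    assert (HX : Rabs (u 2 y1 xi * (s1 - s2) + (V 0 0 s0 + (V 0 eta s2 - V 0 0 s0)) * (y1 - y2)) <= m).
    { replace (u 2 y1 xi * (s1 - s2) + (V 0 0 s0 + (V 0 eta s2 - V 0 0 s0)) * (y1 - y2))
        with (u 0 y1 s1 - u 0 y2 s2) by (rewrite <- F0; lra). apply Rmax_l. }
    assert (HY : Rabs ((1 + (u 3 y1 xi' - 1)) * (s1 - s2) + V 1 eta' s2 * (y1 - y2)) <= m).
    { replace ((1 + (u 3 y1 xi' - 1)) * (s1 - s2) + V 1 eta' s2 * (y1 - y2))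
        with (u 1 y1 s1 - u 1 y2 s2) by (rewrite <- F1; lra). apply Rmax_r. }
    destruct (alg2 c0 Cv eps _ _ _ _ _ _ _ _ Hc0 HCv ltac:(lra) Heps2 (RE1 _ _ Rxi) (RE2 _ _ Reta)
      (RE3 _ _ Rxi') Hv0 (REw _ _ Reta') HX HY) as [A1 A2].
    fold Kinv in A1, A2. replace (s1 - s2) with (x1 - x2) in A1 by (unfold s1, s2; ring).
    split; auto. }
  exists U. split; [apply open_box|]. split.
  { unfold U; simpl. rewrite Rminus_diag, Rabs_R0. lra. }
  split; [|split].
  - intros [x y] Hp.
    assert (Rp := UReg _ Hp). simpl in Rp. destruct (RS _ _ Rp) as (Hs & Ha & Ha1).
    destruct Hp as [Hx Hy]. simpl in Hx, Hy.
    set (L := fun j (q : R * R) => plus (scal (fst q) (Fs j y (x + T))) (scal (snd q) (V j y (x + T)))).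
    assert (FD : forall j, (j < 5)%nat -> filterdiff (fun q : R * R => u j (snd q) (fst q + T)) (locally (x, y)) (L j)).
    { intros j Hj. unfold L.
      apply (is_derive_filterdiff (fun a b => u j b (a + T)) x y (fun a b => Fs j b (a + T)) (V j y (x + T))).
      - apply filter_forall. intros q. apply shift_derive. apply ode.
      - apply (V_deriv S HS); auto.
      - apply (proj1 (continuity_2d_pt_filterlim (fun a b => Fs j b (a + T)) x y)). intros e.
        set (dd := Rmin (Rmin (t/4) (1/4)) (e / (2 * CF + 1))).
        assert (Hdd : 0 < dd) by (unfold dd; repeat apply Rmin_pos; try lra; apply Rdiv_lt_0_compat; [apply cond_pos|lra]).
        exists (mkposreal dd Hdd). intros a b Ha' Hb'. simpl in Ha', Hb'.
        assert (dd <= t/4) by (unfold dd; eapply Rle_trans; [apply Rmin_l| apply Rmin_l]).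
        assert (dd <= 1/4) by (unfold dd; eapply Rle_trans; [apply Rmin_l| apply Rmin_r]).
        assert (Hde : dd <= e / (2 * CF + 1)) by (unfold dd; apply Rmin_r).
        apply Rabs_def2 in Hx. apply Rabs_def2 in Ha'.
        assert (Hb1 : Rabs b <= 1).
        { replace b with ((b - y) + y) by ring. eapply Rle_trans; [apply Rabs_triang|]. lra. }
        assert (Has : 0 <= a + T <= S) by (unfold S; lra).
        assert (E := HFc y b j (x + T) (a + T) Ha1 Hb1 Hj Hs Has).
        replace (a + T - (x + T)) with (a - x) in E by ring.
        eapply Rle_lt_trans; [exact E|].
        assert (Rabs (a - x) + Rabs (b - y) <= 2 * dd) by (assert (Rabs (a - x) < dd) by (apply Rabs_def1; lra); lra).
        assert (CF * (Rabs (a - x) + Rabs (b - y)) <= CF * (2 * dd)) by (apply Rmult_le_compat_l; lra).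
        assert (CF * (2 * dd) <= CF * (2 * (e / (2 * CF + 1)))) by (apply Rmult_le_compat_l; lra).
        assert (CF * (2 * (e / (2 * CF + 1))) < e).
        { assert (He := cond_pos e).
          replace (CF * (2 * (e / (2 * CF + 1)))) with (e * (2 * CF / (2 * CF + 1))) by (field; lra).
          rewrite <- (Rmult_1_r e) at 2. apply Rmult_lt_compat_l; [lra|].
          apply (Rmult_lt_reg_r (2 * CF + 1)); [lra|]. unfold Rdiv. rewrite Rmult_assoc, Rinv_l by lra. lra. }
        lra. }
    exists (fun q => (L 0%nat q, L 1%nat q, L 4%nat q)).
    assert (FDall : filterdiff Phi (locally (x, y)) (fun q => (L 0%nat q, L 1%nat q, L 4%nat q))).
    { assert (P01 := @filterdiff_pair R_AbsRing _ _ _ (locally (x, y)) (@filter_filter _ _ (locally_filter _)) _ _ _ _ (FD 0%nat ltac:(lia)) (FD 1%nat ltac:(lia))).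
      assert (P := @filterdiff_pair R_AbsRing _ _ _ (locally (x, y)) (@filter_filter _ _ (locally_filter _)) _ _ _ _ P01 (FD 4%nat ltac:(lia))).
      eapply filterdiff_ext; [|exact P]. intros q. reflexivity. }
    split; [exact (proj1 FDall)|]. split; [exact FDall|].
    intros [a b] Hv.
    injection Hv as H0 H1 H4.
    change (a * Fs 0 y (x + T) + b * V 0 y (x + T) = 0) in H0.
    change (a * Fs 1 y (x + T) + b * V 1 y (x + T) = 0) in H1.
    assert (F0 : Fs 0 y (x + T) = u 2 y (x + T)) by (unfold Fs; cbn [Fm]; reflexivity).
    assert (F1 : Fs 1 y (x + T) = u 3 y (x + T)) by (unfold Fs; cbn [Fm]; reflexivity).
    assert (HX : Rabs (u 2 y (x + T) * a + (V 0 0 s0 + (V 0 y (x + T) - V 0 0 s0)) * b) <= 0).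
    { replace (u 2 y (x + T) * a + (V 0 0 s0 + (V 0 y (x + T) - V 0 0 s0)) * b) with 0
        by (rewrite <- F0; lra). rewrite Rabs_R0; lra. }
    assert (HY : Rabs ((1 + (u 3 y (x + T) - 1)) * a + V 1 y (x + T) * b) <= 0).
    { replace ((1 + (u 3 y (x + T) - 1)) * a + V 1 y (x + T) * b) with 0
        by (rewrite <- F1; lra). rewrite Rabs_R0; lra. }
    destruct (alg2 c0 Cv eps _ _ _ _ _ _ _ _ Hc0 HCv ltac:(lra) Heps2 (RE1 _ _ Rp) (RE2 _ _ Rp)
      (RE3 _ _ Rp) Hv0 (REw _ _ Rp) HX HY) as [A1 A2].
    rewrite Rmult_0_r in A1, A2.
    assert (a = 0) by (pose proof (Rabs_pos a); apply Rabs_eq_0; lra).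
    assert (b = 0) by (pose proof (Rabs_pos b); apply Rabs_eq_0; lra).
    subst. reflexivity.
  - intros p q Hp Hq HE.
    destruct (LB p q Hp Hq) as [A1 A2].
    unfold Phi in HE. injection HE as E0 E1 E4.
    change (u 0 (snd p) (fst p + T) = u 0 (snd q) (fst q + T)) in E0.
    change (u 1 (snd p) (fst p + T) = u 1 (snd q) (fst q + T)) in E1.
    assert (Hm0 : Rmax (Rabs (u 0 (snd p) (fst p + T) - u 0 (snd q) (fst q + T)))
       (Rabs (u 1 (snd p) (fst p + T) - u 1 (snd q) (fst q + T))) = 0).
    { rewrite E0, E1, !Rminus_diag, Rabs_R0. apply Rmax_left. lra. }
    rewrite Hm0, Rmult_0_r in A1, A2.
    destruct p as [p1 p2], q as [q1 q2]. simpl in A1, A2.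
    assert (p1 = q1) by (pose proof (Rabs_pos (p1 - q1)) as P0; assert (P1 : Rabs (p1 - q1) = 0) by lra; apply Rabs_eq_0 in P1; lra).
    assert (p2 = q2) by (pose proof (Rabs_pos (p2 - q2)) as P0; assert (P1 : Rabs (p2 - q2) = 0) by lra; apply Rabs_eq_0 in P1; lra).
    subst; reflexivity.
  - intros p Hp eps'.
    assert (Hd : 0 < eps' / (Kinv + 1)) by (apply Rdiv_lt_0_compat; [apply cond_pos| lra]).
    exists (mkposreal _ Hd). intros q Hq Hb.
    destruct Hb as [[Bx By] _].
    change (Rabs (u 0 (snd q) (fst q + T) - u 0 (snd p) (fst p + T)) < eps' / (Kinv + 1)) in Bx.
    change (Rabs (u 1 (snd q) (fst q + T) - u 1 (snd p) (fst p + T)) < eps' / (Kinv + 1)) in By.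
    rewrite Rabs_minus_sym in Bx, By.
    destruct (LB p q Hp Hq) as [A1 A2].
    set (m := Rmax (Rabs (u 0 (snd p) (fst p + T) - u 0 (snd q) (fst q + T)))
                   (Rabs (u 1 (snd p) (fst p + T) - u 1 (snd q) (fst q + T)))) in *.
    assert (Hm : m < eps' / (Kinv + 1)) by (unfold m; apply Rmax_lub_lt; auto).
    assert (HK : Kinv * m < eps').
    { assert (Kinv * m <= Kinv * (eps' / (Kinv + 1))) by (apply Rmult_le_compat_l; lra).
      assert (Kinv * (eps' / (Kinv + 1)) < eps').
      { assert (He := cond_pos eps').
        replace (Kinv * (eps' / (Kinv + 1))) with (eps' * (Kinv / (Kinv + 1))) by (field; lra).
        rewrite <- (Rmult_1_r eps') at 2. apply Rmult_lt_compat_l; [lra|].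
        apply (Rmult_lt_reg_r (Kinv + 1)); [lra|]. unfold Rdiv. rewrite Rmult_assoc, Rinv_l by lra. lra. }
      lra. }
    split.
    + change (Rabs (fst q - fst p) < eps'). rewrite Rabs_minus_sym. lra.
    + change (Rabs (snd q - snd p) < eps'). rewrite Rabs_minus_sym. lra.
Qed.

End Traj.


Theorem mainTheorem4
  (theta : R -> R) (Htheta : cutoff theta) (T : R) (HT : 0 < T)
  (X Y Z PX PY PZ : R -> R -> R)
  (Htraj : forall alpha : R,
      ham_traj theta (X alpha) (Y alpha) (Z alpha) (PX alpha) (PY alpha) (PZ alpha))
  (Hinit : forall alpha : R,
      X alpha 0 = 0 /\ Y alpha 0 = - T /\ Z alpha 0 = 0 /\
      PX alpha 0 = 0 /\ PY alpha 0 = 1 /\ PZ alpha 0 = alpha)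
  (t : R) (Ht : 0 < t) :
  let Phi := fun q : R * R =>
    (X (snd q) (fst q + T), Y (snd q) (fst q + T), Z (snd q) (fst q + T)) in
  exists U : R * R -> Prop, open U /\ U (t, 0) /\ embedding_on U Phi.
Proof.
  exact (main_sec theta Htheta T HT X Y Z PX PY PZ Htraj Hinit t Ht).
Qed.
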